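(* Fix unit vectors $A,B,C\in\mathbb S^2\subset\operatorname{Im}\mathbb H$. Let $\bar\nu:\mathbb S^2\times\mathbb S^2\to\mathbb R^3$, $\bar\nu(x,y)=(x\cdot y,x\cdot C,y\cdot C)$, let $\pi_X:\mathbb S^3\to\mathbb S^2$, $\pi_X(p)=\bar pXp$, let $\nu=\bar\nu\circ(\pi_A\times\pi_B):\mathbb S^3\times\mathbb S^3\to\mathbb R^3$, and let $\Delta=\bar\nu(\mathbb S^2\times\mathbb S^2)$, with interior $\mathring\Delta$, boundary $\partial\Delta$, and $V=\{(1,1,1),(1,-1,-1),(-1,1,-1),(-1,-1,1)\}$. For $(x,y)\in\mathbb S^2\times\mathbb S^2$: (1) if $\dim\operatorname{Span}\{x,y,C\}=1$, then $\bar\nu(x,y)\in V$, $\bar\nu^{-1}(\bar\nu(x,y))=\{(x,y)\}$, and $\nu^{-1}(\bar\nu(x,y))$ is a $2$-torus; (2) if $\dim\operatorname{Span}\{x,y,C\}=2$, then $\bar\nu(x,y)\in\partial\Delta\setminus V$, $\bar\nu^{-1}(\bar\nu(x,y))$ is a circle, and $\nu^{-1}(\bar\nu(x,y))$ is a $3$-torus; (3) if $\dim\operatorname{Span}\{x,y,C\}=3$, then $\bar\nu(x,y)\in\mathring\Delta$, $\bar\nu^{-1}(\bar\nu(x,y))$ is a disjoint union of two circles, and $\nu^{-1}(\bar\nu(x,y))$ is a disjoint union of two $3$-tori. Moreover the four points with $x,y\in\{\pm C\}$ map bijectively onto $V$: $\bar\nu(C,C)=(1,1,1)$, $\bar\nu(C,-C)=(-1,1,-1)$,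 $\bar\nu(-C,C)=(-1,-1,1)$, $\bar\nu(-C,-C)=(1,-1,-1)$.
   Context: $\mathbb S^3$ is the unit quaternions, $\mathbb S^2$ the unit imaginary quaternions, $\cdot$ the Euclidean inner product on $\operatorname{Im}\mathbb H\cong\mathbb R^3$. The map $\pi_A\times\pi_B$ is a $\mathbb T^2$-bundle (each $\pi_X$ is a circle bundle, a Hopf fibration). $\nu$ is the multi-moment map of the $\mathbb T^3$-action $(p,q)\mapsto(e^{At_1}pe^{-Ct_3},e^{Bt_2}qe^{-Ct_3})$ on the homogeneous nearly Kähler $\mathbb S^3\times\mathbb S^3$, in a suitable basis of $\Lambda^2\mathfrak t^*\cong\mathbb R^3$. *)

(* Defs.v *)
From Stdlib Require Import Reals List.
Open Scope R_scope.

Definition edR (x y : R) : R := Rabs (x - y).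
Definition dprod {X Y : Type} (dX : X -> X -> R) (dY : Y -> Y -> R)
  (p q : X * Y) : R := sqrt (dX (fst p) (fst q) ^ 2 + dY (snd p) (snd q) ^ 2).

Definition R2 : Type := (R * R)%type.
Definition R3 : Type := (R * R * R)%type.      (* = Im H *)
Definition R4 : Type := (R * R * R * R)%type.  (* = H, (real, i, j, k) *)
Definition ed2 : R2 -> R2 -> R := dprod edR edR.
Definition ed3 : R3 -> R3 -> R := dprod ed2 edR.
Definition ed4 : R4 -> R4 -> R := dprod ed3 edR.

Definition cont_on {X Y : Type} (dX : X -> X -> R) (dY : Y -> Y -> R)
  (S : X -> Prop) (f : X -> Y) : Prop :=
  forall x, S x -> forall eps, 0 < eps -> exists delta, 0 < delta /\
    forall x', S x' -> dX x x' < delta -> dY (f x) (f x') < eps.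

Definition homeomorphic {X Y : Type} (dX : X -> X -> R) (dY : Y -> Y -> R)
  (S : X -> Prop) (T : Y -> Prop) : Prop :=
  exists (f : X -> Y) (g : Y -> X),
    (forall x, S x -> T (f x)) /\ (forall y, T y -> S (g y)) /\
    (forall x, S x -> g (f x) = x) /\ (forall y, T y -> f (g y) = y) /\
    cont_on dX dY S f /\ cont_on dY dX T g.

Definition circle (p : R2) : Prop := let '(a, b) := p in a ^ 2 + b ^ 2 = 1.
Definition torus2 (p : R2 * R2) : Prop := circle (fst p) /\ circle (snd p).
Definition d_torus2 := dprod ed2 ed2.
Definition torus3 (p : R2 * R2 * R2) : Prop :=
  circle (fst (fst p)) /\ circle (snd (fst p)) /\ circle (snd p).
Definition d_torus3 := dprod (dprod ed2 ed2) ed2.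
(* disjoint union of two circles: S^1 x {0,1} *)
Definition two_circles (p : R2 * R) : Prop := circle (fst p) /\ (snd p = 0 \/ snd p = 1).
Definition d_two_circles := dprod ed2 edR.
(* disjoint union of two 3-tori: T^3 x {0,1} *)
Definition two_torus3 (p : R2 * R2 * R2 * R) : Prop :=
  torus3 (fst p) /\ (snd p = 0 \/ snd p = 1).
Definition d_two_torus3 := dprod d_torus3 edR.

Definition dot (u v : R3) : R :=
  let '(u1, u2, u3) := u in let '(v1, v2, v3) := v in u1 * v1 + u2 * v2 + u3 * v3.
Definition vopp (u : R3) : R3 := let '(u1, u2, u3) := u in (- u1, - u2, - u3).
Definition vzero : R3 := (0, 0, 0).
Definition vadd (u v : R3) : R3 :=
  let '(u1, u2, u3) := u in let '(v1, v2, v3) := v in (u1 + v1, u2 + v2, u3 + v3).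
Definition vscale (c : R) (u : R3) : R3 := let '(u1, u2, u3) := u in (c * u1, c * u2, c * u3).
Definition S2 (x : R3) : Prop := dot x x = 1.

Fixpoint lincomb (cs : list R) (vs : list R3) : R3 :=
  match cs, vs with
  | c :: cs', v :: vs' => vadd (vscale c v) (lincomb cs' vs')
  | _, _ => vzero
  end.
Definition in_span (vs : list R3) (v : R3) : Prop :=
  exists cs, length cs = length vs /\ lincomb cs vs = v.
Definition lin_indep (vs : list R3) : Prop :=
  forall cs, length cs = length vs -> lincomb cs vs = vzero -> Forall (fun c => c = 0) cs.
Definition span_dim (vs : list R3) (k : nat) : Prop :=
  exists b, length b = k /\ lin_indep b /\ (forall v, in_span b v <-> in_span vs v).

Definition qmul (p q : R4) : R4 :=
  let '(a1, b1, c1, d1) := p in let '(a2, b2, c2, ed2) := q in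
  (a1 * a2 - b1 * b2 - c1 * c2 - d1 * ed2,
   a1 * b2 + b1 * a2 + c1 * ed2 - d1 * c2,
   a1 * c2 - b1 * ed2 + c1 * a2 + d1 * b2,
   a1 * ed2 + b1 * c2 - c1 * b2 + d1 * a2).
Definition qconj (p : R4) : R4 := let '(a, b, c, d) := p in (a, - b, - c, - d).
Definition im_to_H (x : R3) : R4 := let '(x1, x2, x3) := x in (0, x1, x2, x3).
Definition H_im (p : R4) : R3 := let '(_, b, c, d) := p in (b, c, d).
Definition S3 (p : R4) : Prop :=
  let '(a, b, c, d) := p in a ^ 2 + b ^ 2 + c ^ 2 + d ^ 2 = 1.

(* pi_X(p) = pbar X p (purely imaginary for unit p; we record its Im H part) *)
Definition piX (X : R3) (p : R4) : R3 := H_im (qmul (qmul (qconj p) (im_to_H X)) p).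

Definition nubar (C : R3) (xy : R3 * R3) : R3 :=
  (dot (fst xy) (snd xy), dot (fst xy) C, dot (snd xy) C).
Definition nu (A B C : R3) (pq : R4 * R4) : R3 :=
  nubar C (piX A (fst pq), piX B (snd pq)).

Definition S2xS2 (xy : R3 * R3) : Prop := S2 (fst xy) /\ S2 (snd xy).
Definition S3xS3 (pq : R4 * R4) : Prop := S3 (fst pq) /\ S3 (snd pq).
Definition ed33 := dprod ed3 ed3.
Definition ed44 := dprod ed4 ed4.

Definition DeltaSet (C : R3) (v : R3) : Prop := exists xy, S2xS2 xy /\ nubar C xy = v.

Definition interior3 (S : R3 -> Prop) (v : R3) : Prop :=
  exists r, 0 < r /\ forall w, ed3 v w < r -> S w.
Definition closure3 (S : R3 -> Prop) (v : R3) : Prop :=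
  forall r, 0 < r -> exists w, S w /\ ed3 v w < r.
Definition boundary3 (S : R3 -> Prop) (v : R3) : Prop := closure3 S v /\ ~ interior3 S v.

Definition Vset (v : R3) : Prop :=
  v = (1, 1, 1) \/ v = (1, -1, -1) \/ v = (-1, 1, -1) \/ v = (-1, -1, 1).

Definition nubar_fibre (C v : R3) (xy : R3 * R3) : Prop := S2xS2 xy /\ nubar C xy = v.
Definition nu_fibre (A B C v : R3) (pq : R4 * R4) : Prop := S3xS3 pq /\ nu A B C pq = v.

(* Main.v *)
Require Import Defs.
From Stdlib Require Import Reals List Lra Psatz.
Import ListNotations.
Open Scope R_scope.

Ltac destr := repeat match goal with
 | p : R4 |- _ => let a := fresh "a" in let b := fresh "b" in let c := fresh "c" in let d := fresh "d" in destruct p as [[[a b] c] d]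
 | p : R3 |- _ => let a := fresh "a" in let b := fresh "b" in let c := fresh "c" in destruct p as [[a b] c]
 | p : R2 |- _ => let a := fresh "a" in let b := fresh "b" in destruct p as [a b]
 | p : prod _ _ |- _ => destruct p
 end.
Ltac peq := repeat match goal with |- (_,_) = (_,_) => f_equal end.
Ltac unf := unfold piX, qmul, qconj, im_to_H, H_im, dot, nubar, vscale, vadd, vopp, vzero in *; simpl in *.

Definition qn (p : R4) : R := let '(a,b,c,d) := p in a^2+b^2+c^2+d^2.
Definition E3 : R3 := (0,0,1).
Definition cross (u v : R3) : R3 :=
  let '(u1,u2,u3) := u in let '(v1,v2,v3) := v in (u2*v3-u3*v2, u3*v1-u1*v3, u1*v2-u2*v1).
Definition det3 (u v w : R3) : R := dot u (cross v w).
Definition qadd (p q : R4) : R4 := let '(a,b,c,d) := p in let '(e,f,g,h) := q in (a+e,b+f,c+g,d+h).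
Definition qscale (l : R) (p : R4) : R4 := let '(a,b,c,d) := p in (l*a,l*b,l*c,l*d).
Definition eU (A : R3) (cs : R2) : R4 := let '(c,s) := cs in let '(a1,a2,a3) := A in (c, s*a1, s*a2, s*a3).
Definition hc (A : R3) (p0 p : R4) : R2 :=
  let u := qmul p (qconj p0) in (fst (fst (fst u)), dot (H_im u) A).
Definition kq : R4 := (0,0,0,1).
Definition sectG (one : R) (A : R3) (p0 : R4) (cs : R2) : R4 :=
  let '(c,s) := cs in
  let Ap := qmul (im_to_H A) p0 in
  qadd (qadd (qscale ((one+c)/2) p0) (qscale ((c-one)/2) (qmul Ap kq)))
       (qscale (s/2) (qadd Ap (qscale (-1) (qmul p0 kq)))).
Definition sect := sectG 1.
Definition rot (cs : R2) (z : R3) : R3 :=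
  let '(c,s) := cs in let '(z1,z2,z3) := z in (c*z1 - s*z2, s*z1 + c*z2, z3).
Definition ang (u z : R3) : R2 :=
  let '(u1,u2,u3) := u in let '(z1,z2,z3) := z in
  ((u1*z1+u2*z2)/(u1^2+u2^2), (u1*z2-u2*z1)/(u1^2+u2^2)).
Definition det2 (z : R3*R3) : R :=
  let '((a1,a2,a3),(b1,b2,b3)) := z in a1*b2 - a2*b1.
Definition yk (x y : R3) (k : R) : R3 :=
  let '(x1,x2,x3) := x in let '(y1,y2,y3) := y in
  let m := x1^2+x2^2 in let D := x1*y2-x2*y1 in
  (y1 + 2*k*D*x2/m, y2 - 2*k*D*x1/m, y3).
Definition gram (v : R3) : R := let '(a,b,c) := v in 1 + 2*a*b*c - a^2 - b^2 - c^2.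

Lemma S3_qn p : S3 p <-> qn p = 1.
Proof. destr; unfold S3, qn; tauto. Qed.

Lemma piX_mul X p q : piX X (qmul p q) = piX (piX X p) q.
Proof. destr; unf; peq; ring. Qed.
Lemma piX_dot u v r : dot (piX u r) (piX v r) = (qn r)^2 * dot u v.
Proof. destr; unf; unfold qn; ring. Qed.
Lemma qn_mul p q : qn (qmul p q) = qn p * qn q.
Proof. destr; unf; unfold qn; ring. Qed.
Lemma qn_conj p : qn (qconj p) = qn p.
Proof. destr; unf; unfold qn; ring. Qed.
Lemma piX_inv1 z r : piX (piX z r) (qconj r) = vscale ((qn r)^2) z.
Proof. destr; unf; unfold qn; peq; ring. Qed.
Lemma piX_inv2 z r : piX (piX z (qconj r)) r = vscale ((qn r)^2) z.
Proof. destr; unf; unfold qn; peq; ring. Qed.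
Lemma vscale1 z : vscale 1 z = z.
Proof. destr; unf; peq; ring. Qed.
Lemma S3_mul p q : S3 p -> S3 q -> S3 (qmul p q).
Proof. rewrite !S3_qn, qn_mul. intros -> ->; ring. Qed.
Lemma S3_conj p : S3 p -> S3 (qconj p).
Proof. rewrite !S3_qn, qn_conj. auto. Qed.
Lemma S2_piX X p : S2 X -> S3 p -> S2 (piX X p).
Proof. unfold S2; rewrite S3_qn; intros h1 h2. rewrite piX_dot, h1, h2; ring. Qed.

Lemma lc1 L R m1 e1 : e1 = 0 -> L - R = m1*e1 -> L = R.
Proof. intros h1 h; rewrite h1 in h; lra. Qed.
Lemma lc2 L R m1 e1 m2 e2 : e1 = 0 -> e2 = 0 -> L - R = m1*e1+m2*e2 -> L = R.
Proof. intros h1 h2 h; rewrite h1, h2 in h; lra. Qed.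
Lemma lc3 L R m1 e1 m2 e2 m3 e3 : e1 = 0 -> e2 = 0 -> e3 = 0 -> L - R = m1*e1+m2*e2+m3*e3 -> L = R.
Proof. intros h1 h2 h3 h; rewrite h1, h2, h3 in h; lra. Qed.
Lemma lc4 L R m1 e1 m2 e2 m3 e3 m4 e4 : e1 = 0 -> e2 = 0 -> e3 = 0 -> e4 = 0 -> L - R = m1*e1+m2*e2+m3*e3+m4*e4 -> L = R.
Proof. intros h1 h2 h3 h4 h; rewrite h1, h2, h3, h4 in h; lra. Qed.

Definition circleP (cs : R2) := circle cs.

Lemma qn_eU A c s : qn (eU A (c,s)) = c^2 + s^2 * dot A A.
Proof. destr; unf; unfold eU, qn; ring. Qed.
Lemma piX_eU A c s : piX A (eU A (c,s)) = vscale (c^2 + s^2 * dot A A) A.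
Proof. destr; unf; unfold eU; peq; ring. Qed.
Lemma piX_vscale l z p : piX (vscale l z) p = vscale l (piX z p).
Proof. destr; unf; peq; ring. Qed.
Lemma mul_conj_r e p : qmul (qmul e p) (qconj p) = qscale (qn p) e.
Proof. destr; unf; unfold qscale, qn; peq; ring. Qed.
Lemma mul_conj_l p q : qmul (qmul p (qconj q)) q = qscale (qn q) p.
Proof. destr; unf; unfold qscale, qn; peq; ring. Qed.
Lemma qscale1 p : qscale 1 p = p.
Proof. destr; unfold qscale; peq; ring. Qed.

Lemma H2 A p0 cs : S2 A -> S3 p0 -> circle cs ->
  S3 (qmul (eU A cs) p0) /\ piX A (qmul (eU A cs) p0) = piX A p0 /\ hc A p0 (qmul (eU A cs) p0) = cs.
Proof.
  intros hA hp hcs. destruct cs as [c s]. unfold circle in hcs. unfold S2 in hA.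
  split; [|split].
  - apply S3_mul; auto. apply S3_qn. rewrite qn_eU, hA. lra.
  - rewrite piX_mul, piX_eU, hA, piX_vscale. replace (c^2+s^2*1) with 1 by lra. apply vscale1.
  - unfold hc. rewrite mul_conj_r. apply S3_qn in hp. rewrite hp, qscale1.
    destr; unfold eU, H_im, dot in *; simpl. f_equal.
    match goal with h : ?e = 1 |- _ => apply (lc1 _ _ s (e - 1)); [lra|ring] end.
Qed.

Lemma imH_piX X u : im_to_H (piX X u) = qmul (qmul (qconj u) (im_to_H X)) u.
Proof. destr; unf; peq; ring. Qed.
Lemma mul_sandwich u Xq : qmul u (qmul (qmul (qconj u) Xq) u) = qscale (qn u) (qmul Xq u).
Proof. destr; unf; unfold qscale, qn; peq; ring. Qed.

Lemma comm_lemma u A : S2 A -> qn u = 1 -> qmul u (im_to_H A) = qmul (im_to_H A) u ->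
  circle (fst (fst (fst u)), dot (H_im u) A) /\ u = eU A (fst (fst (fst u)), dot (H_im u) A).
Proof.
  destruct u as [[[u0 w1] w2] w3]; destruct A as [[a1 a2] a3].
  unfold S2; unf; unfold qn, eU, circle in *; intros hA hu E.
  injection E; intros e4 e3 e2 _.
  assert (n1 : w2*a3 - w3*a2 = 0) by lra.
  assert (n2 : w3*a1 - w1*a3 = 0) by lra.
  assert (n3 : w1*a2 - w2*a1 = 0) by lra.
  set (t := w1*a1+w2*a2+w3*a3).
  assert (eb : w1 = t*a1).
  { apply (lc3 _ _ (-w1) (a1*a1+a2*a2+a3*a3 - 1) a2 (w1*a2 - w2*a1) (-a3) (w3*a1 - w1*a3)); [lra|lra|lra|unfold t; ring]. }
  assert (ec : w2 = t*a2).
  { apply (lc3 _ _ (-w2) (a1*a1+a2*a2+a3*a3 - 1) (-a1) (w1*a2 - w2*a1) a3 (w2*a3 - w3*a2)); [lra|lra|lra|unfold t; ring]. }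
  assert (ed : w3 = t*a3).
  { apply (lc3 _ _ (-w3) (a1*a1+a2*a2+a3*a3 - 1) a1 (w3*a1 - w1*a3) (-a2) (w2*a3 - w3*a2)); [lra|lra|lra|unfold t; ring]. }
  split.
  - rewrite eb, ec, ed in hu.
    apply (lc2 _ _ 1 (u0^2 + (t*a1)^2 + (t*a2)^2 + (t*a3)^2 - 1) (-t^2) (a1*a1+a2*a2+a3*a3 - 1)); [lra|lra|ring].
  - peq; auto.
Qed.

Lemma H1 A p0 p : S2 A -> S3 p0 -> S3 p -> piX A p = piX A p0 ->
  circle (hc A p0 p) /\ p = qmul (eU A (hc A p0 p)) p0.
Proof.
  intros hA h0 hp E.
  assert (q0 : qn p0 = 1) by (apply S3_qn; auto).
  assert (qp : qn p = 1) by (apply S3_qn; auto).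
  set (u := qmul p (qconj p0)).
  assert (pu : p = qmul u p0) by (unfold u; rewrite mul_conj_l, q0, qscale1; auto).
  assert (hu : piX A u = A) by (unfold u; rewrite piX_mul, E, piX_inv1, q0; replace (1^2) with 1 by ring; apply vscale1).
  assert (qnu : qn u = 1) by (unfold u; rewrite qn_mul, qn_conj, q0, qp; ring).
  assert (Ec : qmul u (im_to_H A) = qmul (im_to_H A) u).
  { pose proof (mul_sandwich u (im_to_H A)) as M. rewrite <- imH_piX, hu, qnu, qscale1 in M. exact M. }
  destruct (comm_lemma u A hA qnu Ec) as [c1 c2].
  change (hc A p0 p) with (fst (fst (fst u)), dot (H_im u) A).
  split; auto. rewrite <- c2. exact pu.
Qed.

Lemma piX_qscale l X p : piX X (qscale l p) = vscale (l^2) (piX X p).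
Proof. destr; unf; unfold qscale; peq; ring. Qed.
Lemma qn_qscale l p : qn (qscale l p) = l^2 * qn p.
Proof. destr; unfold qscale, qn; ring. Qed.

Lemma CS_dot x y : S2 x -> S2 y -> -1 <= dot x y <= 1.
Proof. unfold S2; destruct x as [[x1 x2] x3]; destruct y as [[y1 y2] y3]; unf; intros.
  assert (0 <= (x1-y1)^2+(x2-y2)^2+(x3-y3)^2) by (apply Rplus_le_le_0_compat; [apply Rplus_le_le_0_compat|]; apply pow2_ge_0).
  assert (0 <= (x1+y1)^2+(x2+y2)^2+(x3+y3)^2) by (apply Rplus_le_le_0_compat; [apply Rplus_le_le_0_compat|]; apply pow2_ge_0).
  split; nra. Qed.

Definition wq (A z : R3) : R4 :=
  let '(a1,a2,a3) := A in let '(z1,z2,z3) := z in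
  (1 + (a1*z1+a2*z2+a3*z3), -(a2*z3-a3*z2), -(a3*z1-a1*z3), -(a1*z2-a2*z1)).
Lemma piX_wq A z : piX A (wq A z) =
  vadd (vscale (1 - dot A A * dot z z) A) (vscale (2 * dot A A * (1 + dot A z)) z).
Proof. destr; unf; unfold wq; peq; ring. Qed.
Lemma qn_wq A z : qn (wq A z) = 1 + 2 * dot A z + dot A A * dot z z.
Proof. destr; unf; unfold wq, qn; ring. Qed.
Lemma vscale_vscale a b z : vscale a (vscale b z) = vscale (a*b) z.
Proof. destr; unf; peq; ring. Qed.
Lemma vadd_vscale0 A z : vadd (vscale 0 A) z = z.
Proof. destr; unf; peq; ring. Qed.

Definition piXe (A e : R3) : R3 := piX A (im_to_H e).
Lemma piX_pure A e : piX A (im_to_H e) = vadd (vscale (2 * dot e A) e) (vscale (- dot e e) A).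
Proof. destr; unf; peq; ring. Qed.

Lemma orth_exists A : S2 A -> exists e, S2 e /\ dot e A = 0.
Proof.
  destruct A as [[a1 a2] a3]; unfold S2; unf; intro h.
  destruct (Req_dec (a2^2+a3^2) 0) as [z|nz].
  - exists (0,1,0). unf. assert (a2 = 0) by nra. subst. split; ring.
  - assert (0 < a2^2+a3^2) by (assert (0 <= a2^2) by apply pow2_ge_0; assert (0 <= a3^2) by apply pow2_ge_0; lra).
    set (n := sqrt (a2^2+a3^2)).
    assert (n2 : n*n = a2^2+a3^2) by (apply sqrt_sqrt; lra).
    assert (np : 0 < n) by (apply sqrt_lt_R0; lra).
    exists (0, -a3/n, a2/n). unf. split.
    + transitivity ((a2^2+a3^2)/(n*n)); [field; lra|]. rewrite n2. field. lra.
    + field. lra.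
Qed.

Lemma Hs A z : S2 A -> S2 z -> exists p, S3 p /\ piX A p = z.
Proof.
  intros hA hz. pose proof (CS_dot A z hA hz) as [cs1 cs2].
  destruct (Rle_lt_or_eq_dec _ _ cs1) as [lt|eq].
  - set (t := 1 + dot A z).
    assert (tp : 0 < t) by (unfold t; lra).
    set (l := / sqrt (2*t)).
    assert (l2 : l^2 = / (2*t)).
    { unfold l. rewrite pow_inv. f_equal. simpl. rewrite Rmult_1_r. apply sqrt_sqrt. lra. }
    exists (qscale l (wq A z)). unfold S2 in *. split.
    + apply S3_qn. rewrite qn_qscale, l2, qn_wq, hA, hz. unfold t in *. field. lra.
    + rewrite piX_qscale, l2, piX_wq, hA, hz. unfold t in *.
      replace (1 - 1*1) with 0 by ring. rewrite vadd_vscale0, vscale_vscale.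
      replace (/ (2*(1+dot A z)) * (2*1*(1+dot A z))) with 1 by (field; lra). apply vscale1.
  - destruct (orth_exists A hA) as [e [he eA]].
    exists (im_to_H e). split.
    + destruct e as [[e1 e2] e3]; unfold S2 in he; unf; unfold S3. lra.
    + rewrite piX_pure, eA, he.
      assert (zA : z = vopp A).
      { destruct A as [[a1 a2] a3]; destruct z as [[z1 z2] z3]; unfold S2 in *; unf.
        assert (q : (z1+a1)^2+(z2+a2)^2+(z3+a3)^2 = 0) by nra.
        assert (0 <= (z1+a1)^2) by apply pow2_ge_0.
        assert (0 <= (z2+a2)^2) by apply pow2_ge_0.
        assert (0 <= (z3+a3)^2) by apply pow2_ge_0.
        assert ((z1+a1)^2 = 0) by lra. assert ((z2+a2)^2 = 0) by lra. assert ((z3+a3)^2 = 0) by lra.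
        peq; nra. }
      rewrite zA. destr; unf; peq; ring.
Qed.

Lemma half c s : c^2+s^2 = 1 -> exists h g, h^2+g^2 = 1 /\ c = h^2-g^2 /\ s = 2*h*g.
Proof.
  intro H. destruct (Req_dec c (-1)) as [e|ne].
  - exists 0, 1. subst. assert (s = 0) by nra. subst. repeat split; ring.
  - assert (cp : -1 < c) by (assert (c^2 <= 1) by (assert (0 <= s^2) by apply pow2_ge_0; lra); nra).
    set (h := sqrt ((1+c)/2)).
    assert (h2 : h*h = (1+c)/2) by (apply sqrt_sqrt; lra).
    assert (hp : 0 < h) by (apply sqrt_lt_R0; lra).
    exists h, (s/(2*h)). 
    assert (e1 : (s/(2*h))^2 = (1-c)/2).
    { transitivity (s^2/(4*(h*h))); [field; lra|]. rewrite h2. replace (s^2) with (1-c^2) by lra. field. lra. }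
    repeat split.
    + rewrite e1. replace (h^2) with (h*h) by ring. rewrite h2. field.
    + rewrite e1. replace (h^2) with (h*h) by ring. rewrite h2. field.
    + field. lra.
Qed.

Lemma sect_eq A p0 h g : h^2+g^2 = 1 ->
  sect A p0 (h^2-g^2, 2*h*g) = qmul (qmul (eU A (h,g)) p0) (h,0,0,-g).
Proof. intro H. unfold sect. rewrite <- H. destr; unfold sectG, eU, qadd, qscale, kq; unf. peq; field. Qed.

Lemma piX_rq z h g : piX z (h,0,0,-g) = let '(z1,z2,z3) := z in
  ((h^2-g^2)*z1 - 2*h*g*z2, 2*h*g*z1 + (h^2-g^2)*z2, (h^2+g^2)*z3).
Proof. destr; unf; peq; ring. Qed.

Definition circleR2 := circle.

Lemma sect_props A p0 cs : S2 A -> S3 p0 -> circle cs ->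
  S3 (sect A p0 cs) /\ piX A (sect A p0 cs) = rot cs (piX A p0).
Proof.
  intros hA hp hcs. destruct cs as [c s]. unfold circle in hcs.
  destruct (half c s hcs) as [h [g [hg [ec es]]]]. subst c s.
  rewrite sect_eq by auto. split.
  - apply S3_qn. rewrite !qn_mul, qn_eU. unfold S2 in hA. rewrite hA. apply S3_qn in hp. rewrite hp.
    unfold qn. replace (h^2+0^2+0^2+(-g)^2) with (h^2+g^2) by ring. rewrite hg. nra.
  - rewrite !piX_mul, piX_eU. unfold S2 in hA. rewrite hA. replace (h^2+g^2*1) with 1 by lra.
    rewrite vscale1, piX_rq. destruct (piX A p0) as [[z1 z2] z3]. unfold rot. rewrite hg. peq; ring.
Qed.

Definition nonnegd {X} (d : X -> X -> R) := forall a b, 0 <= d a b.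
Lemma nonneg_edR : nonnegd edR.
Proof. intros a b; apply Rabs_pos. Qed.
Lemma nonneg_dprod {X Y} (dX : X -> X -> R) (dY : Y -> Y -> R) : nonnegd (dprod dX dY).
Proof. intros a b; apply sqrt_pos. Qed.

Lemma dprod_fst_le {X Y} (dX : X -> X -> R) (dY : Y -> Y -> R) p q : dX (fst p) (fst q) <= dprod dX dY p q.
Proof.
  unfold dprod. apply Rle_trans with (Rabs (dX (fst p) (fst q))); [apply Rle_abs|].
  rewrite <- (sqrt_pow2 (Rabs _)) by apply Rabs_pos. rewrite pow2_abs.
  apply sqrt_le_1_alt. assert (0 <= dY (snd p) (snd q) ^2) by apply pow2_ge_0. lra.
Qed.
Lemma dprod_snd_le {X Y} (dX : X -> X -> R) (dY : Y -> Y -> R) p q : dY (snd p) (snd q) <= dprod dX dY p q.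
Proof.
  unfold dprod. apply Rle_trans with (Rabs (dY (snd p) (snd q))); [apply Rle_abs|].
  rewrite <- (sqrt_pow2 (Rabs _)) by apply Rabs_pos. rewrite pow2_abs.
  apply sqrt_le_1_alt. assert (0 <= dX (fst p) (fst q) ^2) by apply pow2_ge_0. lra.
Qed.
Lemma dprod_small {X Y} (dX : X -> X -> R) (dY : Y -> Y -> R) p q e : nonnegd dX -> nonnegd dY -> 0 < e ->
  dX (fst p) (fst q) < e/2 -> dY (snd p) (snd q) < e/2 -> dprod dX dY p q < e.
Proof.
  intros nX nY he h1 h2. unfold dprod. rewrite <- (sqrt_pow2 e) by lra.
  apply sqrt_lt_1_alt. pose proof (nX (fst p) (fst q)). pose proof (nY (snd p) (snd q)). split; nra.
Qed.

Lemma cont_ext {X Y} (dX : X -> X -> R) (dY : Y -> Y -> R) S f g :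
  cont_on dX dY S f -> (forall x, S x -> f x = g x) -> cont_on dX dY S g.
Proof.
  intros hf e x hx eps he. destruct (hf x hx eps he) as [d [hd H]]. exists d; split; auto.
  intros x' hx' hxx. rewrite <- !e by auto. auto.
Qed.
Lemma cont_sub {X Y} (dX : X -> X -> R) (dY : Y -> Y -> R) (S S' : X -> Prop) f :
  cont_on dX dY S f -> (forall x, S' x -> S x) -> cont_on dX dY S' f.
Proof.
  intros hf e x hx eps he. destruct (hf x (e x hx) eps he) as [d [hd H]]. exists d; split; auto.
Qed.
Lemma cont_comp {X Y Z} (dX : X -> X -> R) (dY : Y -> Y -> R) (dZ : Z -> Z -> R) S T (f : X -> Y) (g : Y -> Z) :
  cont_on dX dY S f -> (forall x, S x -> T (f x)) -> cont_on dY dZ T g -> cont_on dX dZ S (fun x => g (f x)).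
Proof.
  intros hf hST hg x hx eps he. destruct (hg (f x) (hST x hx) eps he) as [d1 [hd1 H1]].
  destruct (hf x hx d1 hd1) as [d2 [hd2 H2]]. exists d2; split; auto.
Qed.
Lemma cont_id {X} (dX : X -> X -> R) S : cont_on dX dX S (fun x => x).
Proof. intros x hx eps he. exists eps; split; auto. Qed.
Lemma cont_fst_of {X Y Z} (dX : X -> X -> R) (dY : Y -> Y -> R) (dZ : Z -> Z -> R) S h :
  cont_on dX (dprod dY dZ) S h -> cont_on dX dY S (fun x => fst (h x)).
Proof.
  intros hh x hx eps he. destruct (hh x hx eps he) as [d [hd H]]. exists d; split; auto.
  intros x' hx' hxx. eapply Rle_lt_trans; [apply dprod_fst_le|]. eauto.
Qed.
Lemma cont_snd_of {X Y Z} (dX : X -> X -> R) (dY : Y -> Y -> R) (dZ : Z -> Z -> R) S h :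
  cont_on dX (dprod dY dZ) S h -> cont_on dX dZ S (fun x => snd (h x)).
Proof.
  intros hh x hx eps he. destruct (hh x hx eps he) as [d [hd H]]. exists d; split; auto.
  intros x' hx' hxx. eapply Rle_lt_trans; [apply dprod_snd_le|]. eauto.
Qed.
Lemma cont_pair {X Y Z} (dX : X -> X -> R) (dY : Y -> Y -> R) (dZ : Z -> Z -> R) S f g :
  nonnegd dY -> nonnegd dZ -> cont_on dX dY S f -> cont_on dX dZ S g -> cont_on dX (dprod dY dZ) S (fun x => (f x, g x)).
Proof.
  intros nY nZ hf hg x hx eps he.
  destruct (hf x hx (eps/2) ltac:(lra)) as [d1 [hd1 H1]].
  destruct (hg x hx (eps/2) ltac:(lra)) as [d2 [hd2 H2]].
  exists (Rmin d1 d2); split; [apply Rmin_glb_lt; auto|].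
  intros x' hx' hxx. apply dprod_small; auto; simpl.
  - apply H1; auto. eapply Rlt_le_trans; [exact hxx| apply Rmin_l].
  - apply H2; auto. eapply Rlt_le_trans; [exact hxx| apply Rmin_r].
Qed.
Lemma cont_const {X} (dX : X -> X -> R) S (c : R) : cont_on dX edR S (fun _ => c).
Proof. intros x hx eps he. exists 1; split; [lra|]. intros. unfold edR. rewrite Rminus_diag, Rabs_R0. auto. Qed.
Lemma cont_plus {X} (dX : X -> X -> R) S f g :
  cont_on dX edR S f -> cont_on dX edR S g -> cont_on dX edR S (fun x => f x + g x).
Proof.
  intros hf hg x hx eps he.
  destruct (hf x hx (eps/2) ltac:(lra)) as [d1 [hd1 H1]].
  destruct (hg x hx (eps/2) ltac:(lra)) as [d2 [hd2 H2]].
  exists (Rmin d1 d2); split; [apply Rmin_glb_lt; auto|].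
  intros x' hx' hxx. unfold edR in *.
  assert (a1 := H1 x' hx' (Rlt_le_trans _ _ _ hxx (Rmin_l _ _))).
  assert (a2 := H2 x' hx' (Rlt_le_trans _ _ _ hxx (Rmin_r _ _))).
  replace (f x + g x - (f x' + g x')) with ((f x - f x') + (g x - g x')) by ring.
  eapply Rle_lt_trans; [apply Rabs_triang|]. lra.
Qed.
Lemma cont_opp {X} (dX : X -> X -> R) S f :
  cont_on dX edR S f -> cont_on dX edR S (fun x => - f x).
Proof.
  intros hf x hx eps he. destruct (hf x hx eps he) as [d [hd H]]. exists d; split; auto.
  intros x' hx' hxx. unfold edR in *. replace (- f x - - f x') with (- (f x - f x')) by ring.
  rewrite Rabs_Ropp. auto.
Qed.
Lemma cont_minus {X} (dX : X -> X -> R) S f g :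
  cont_on dX edR S f -> cont_on dX edR S g -> cont_on dX edR S (fun x => f x - g x).
Proof. intros hf hg. apply (cont_plus _ _ f (fun x => - g x)); auto. apply cont_opp; auto. Qed.
Lemma cont_mult {X} (dX : X -> X -> R) S f g :
  cont_on dX edR S f -> cont_on dX edR S g -> cont_on dX edR S (fun x => f x * g x).
Proof.
  intros hf hg x hx eps he.
  set (A := Rabs (f x)). set (B := Rabs (g x)).
  assert (hA : 0 <= A) by apply Rabs_pos. assert (hB : 0 <= B) by apply Rabs_pos.
  set (e1 := Rmin 1 (eps / (2*(B+1)))). set (e2 := eps/(2*(A+1))).
  assert (he1 : 0 < e1) by (apply Rmin_glb_lt; [lra| apply Rdiv_lt_0_compat; lra]).
  assert (he2 : 0 < e2) by (apply Rdiv_lt_0_compat; lra).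
  destruct (hf x hx e1 he1) as [d1 [hd1 H1]].
  destruct (hg x hx e2 he2) as [d2 [hd2 H2]].
  exists (Rmin d1 d2); split; [apply Rmin_glb_lt; auto|].
  intros x' hx' hxx. unfold edR in *.
  assert (a1 := H1 x' hx' (Rlt_le_trans _ _ _ hxx (Rmin_l _ _))).
  assert (a2 := H2 x' hx' (Rlt_le_trans _ _ _ hxx (Rmin_r _ _))).
  assert (e11 : e1 <= 1) by apply Rmin_l.
  assert (e12 : e1 <= eps / (2*(B+1))) by apply Rmin_r.
  assert (bf : Rabs (f x') <= A + 1).
  { replace (f x') with (f x - (f x - f x')) by ring. eapply Rle_trans; [apply Rabs_triang|].
    rewrite Rabs_Ropp. unfold A. lra. }
  replace (f x * g x - f x' * g x') with (f x' * (g x - g x') + g x * (f x - f x')) by ring.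
  eapply Rle_lt_trans; [apply Rabs_triang|]. rewrite !Rabs_mult.
  assert (t1 : Rabs (f x') * Rabs (g x - g x') <= (A+1) * e2).
  { apply Rmult_le_compat; try apply Rabs_pos; lra. }
  assert (t2 : Rabs (g x) * Rabs (f x - f x') <= B * e1).
  { apply Rmult_le_compat; try apply Rabs_pos; fold B; lra. }
  assert (t3 : (A+1)*e2 = eps/2) by (unfold e2; field; lra).
  assert (t4 : B * e1 < eps/2).
  { apply Rle_lt_trans with (B * (eps / (2*(B+1)))). apply Rmult_le_compat_l; lra.
    apply (Rmult_lt_reg_l (2*(B+1))); [lra|]. field_simplify; lra. }
  lra.
Qed.

Ltac unfold_metrics := unfold ed44, ed33, ed4, ed3, ed2, d_torus3, d_torus2, d_two_circles, d_two_torus3 in *.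
Ltac nn := first [apply nonneg_dprod | apply nonneg_edR].
Ltac cont_step :=
  match goal with
  | |- cont_on _ _ _ (fun x => (@?f x, @?g x)) => apply (cont_pair _ _ _ _ f g); [nn|nn| |]
  | |- cont_on _ edR _ (fun _ => ?c) => apply cont_const
  | |- cont_on _ edR _ (fun x => @?f x + @?g x) => apply (cont_plus _ _ f g)
  | |- cont_on _ edR _ (fun x => @?f x - @?g x) => apply (cont_minus _ _ f g)
  | |- cont_on _ edR _ (fun x => @?f x * @?g x) => apply (cont_mult _ _ f g)
  | |- cont_on _ edR _ (fun x => - @?f x) => apply (cont_opp _ _ f)
  | |- cont_on _ _ _ (fun x => x) => apply cont_id
  | |- cont_on _ _ _ (fun x => fst (@?h x)) => eapply (cont_fst_of _ _ _ _ h)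
  | |- cont_on _ _ _ (fun x => snd (@?h x)) => eapply (cont_snd_of _ _ _ _ h)
  | |- cont_on _ _ _ _ => eassumption
  end.
Ltac cont_tac := unfold_metrics; unfold Rdiv; repeat cont_step.

Definition exp4 (p : R4) : R4 := (fst (fst (fst p)), snd (fst (fst p)), snd (fst p), snd p).
Definition exp3 (p : R3) : R3 := (fst (fst p), snd (fst p), snd p).
Lemma exp4_id p : exp4 p = p. Proof. destruct p as [[[? ?] ?] ?]; reflexivity. Qed.
Lemma exp3_id p : exp3 p = p. Proof. destruct p as [[? ?] ?]; reflexivity. Qed.
Definition exp2 (p : R2) : R2 := (fst p, snd p).
Lemma exp2_id p : exp2 p = p. Proof. destruct p; reflexivity. Qed.

Lemma cont_qmul S : cont_on (dprod ed4 ed4) ed4 S (fun w => qmul (fst w) (snd w)).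
Proof.
  apply (cont_ext _ _ _ (fun w => qmul (exp4 (fst w)) (exp4 (snd w)))); [|intros; rewrite !exp4_id; auto].
  unfold qmul, exp4; simpl. cont_tac.
Qed.
Lemma cont_fst_id {X Y} (dX : X -> X -> R) (dY : Y -> Y -> R) S : cont_on (dprod dX dY) dX S (fun x => fst x).
Proof. apply (cont_fst_of _ _ dY _ (fun x => x)). apply cont_id. Qed.
Lemma cont_snd_id {X Y} (dX : X -> X -> R) (dY : Y -> Y -> R) S : cont_on (dprod dX dY) dY S (fun x => snd x).
Proof. apply (cont_snd_of _ dX _ _ (fun x => x)). apply cont_id. Qed.
Lemma cont_fstfst {X Y Z} (dX : X -> X -> R) (dY : Y -> Y -> R) (dZ : Z -> Z -> R) S : cont_on (dprod (dprod dX dY) dZ) dX S (fun x => fst (fst x)).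
Proof. apply (cont_fst_of _ _ dY _ (fun x => fst x)). apply cont_fst_id. Qed.
Lemma cont_sndfst {X Y Z} (dX : X -> X -> R) (dY : Y -> Y -> R) (dZ : Z -> Z -> R) S : cont_on (dprod (dprod dX dY) dZ) dY S (fun x => snd (fst x)).
Proof. apply (cont_snd_of _ dX _ _ (fun x => fst x)). apply cont_fst_id. Qed.

Section S.
Context {X : Type} (dX : X -> X -> R) (S : X -> Prop).

Lemma cont_qmul2 f1 f2 : cont_on dX ed4 S f1 -> cont_on dX ed4 S f2 -> cont_on dX ed4 S (fun x => qmul (f1 x) (f2 x)).
Proof.
  intros. apply (cont_ext _ _ _ (fun x => qmul (exp4 (f1 x)) (exp4 (f2 x)))); [|intros; rewrite !exp4_id; auto].
  unfold qmul, exp4; simpl. cont_tac.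
Qed.
Lemma cont_qconj f : cont_on dX ed4 S f -> cont_on dX ed4 S (fun x => qconj (f x)).
Proof.
  intros. apply (cont_ext _ _ _ (fun x => qconj (exp4 (f x)))); [|intros; rewrite !exp4_id; auto].
  unfold qconj, exp4; simpl. cont_tac.
Qed.
Lemma cont_piX Y f : cont_on dX ed4 S f -> cont_on dX ed3 S (fun x => piX Y (f x)).
Proof.
  intros. apply (cont_ext _ _ _ (fun x => piX Y (exp4 (f x)))); [|intros; rewrite !exp4_id; auto].
  destruct Y as [[y1 y2] y3]. unfold piX, qmul, qconj, im_to_H, H_im, exp4; simpl. cont_tac.
Qed.
Lemma cont_piXv r f : cont_on dX ed3 S f -> cont_on dX ed3 S (fun x => piX (f x) r).
Proof.
  intros. apply (cont_ext _ _ _ (fun x => piX (exp3 (f x)) r)); [|intros; rewrite !exp3_id; auto].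
  destruct r as [[[r1 r2] r3] r4]. unfold piX, qmul, qconj, im_to_H, H_im, exp3; simpl. cont_tac.
Qed.
Lemma cont_eU A f : cont_on dX ed2 S f -> cont_on dX ed4 S (fun x => eU A (f x)).
Proof.
  intros. apply (cont_ext _ _ _ (fun x => eU A (exp2 (f x)))); [|intros; rewrite !exp2_id; auto].
  destruct A as [[a1 a2] a3]. unfold eU, exp2; simpl. cont_tac.
Qed.
Lemma cont_hc A f1 f2 : cont_on dX ed4 S f1 -> cont_on dX ed4 S f2 -> cont_on dX ed2 S (fun x => hc A (f1 x) (f2 x)).
Proof.
  intros. apply (cont_ext _ _ _ (fun x => hc A (exp4 (f1 x)) (exp4 (f2 x)))); [|intros; rewrite !exp4_id; auto].
  destruct A as [[a1 a2] a3]. unfold hc, qmul, qconj, H_im, dot, exp4; simpl. cont_tac.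
Qed.
Lemma cont_sect A f1 f2 : cont_on dX ed4 S f1 -> cont_on dX ed2 S f2 -> cont_on dX ed4 S (fun x => sect A (f1 x) (f2 x)).
Proof.
  intros. apply (cont_ext _ _ _ (fun x => sect A (exp4 (f1 x)) (exp2 (f2 x)))); [|intros; rewrite exp4_id, exp2_id; auto].
  destruct A as [[a1 a2] a3]. unfold sect, sectG, qadd, qscale, kq, qmul, im_to_H, exp4, exp2; simpl. cont_tac.
Qed.
Lemma cont_rot f g : cont_on dX ed2 S f -> cont_on dX ed3 S g -> cont_on dX ed3 S (fun x => rot (f x) (g x)).
Proof.
  intros. apply (cont_ext _ _ _ (fun x => rot (exp2 (f x)) (exp3 (g x)))); [|intros; rewrite exp2_id, exp3_id; auto].
  unfold rot, exp2, exp3; simpl. cont_tac.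
Qed.
Lemma cont_ang u f : cont_on dX ed3 S f -> cont_on dX ed2 S (fun x => ang u (f x)).
Proof.
  intros. apply (cont_ext _ _ _ (fun x => ang u (exp3 (f x)))); [|intros; rewrite exp3_id; auto].
  destruct u as [[u1 u2] u3]. unfold ang, exp3; simpl. cont_tac.
Qed.
Lemma cont_det2 f : cont_on dX ed33 S f -> cont_on dX edR S (fun x => det2 (f x)).
Proof.
  intros. apply (cont_ext _ _ _ (fun x => det2 (exp3 (fst (f x)), exp3 (snd (f x))))); [|intros; rewrite !exp3_id; destruct (f x); auto].
  unfold det2, exp3; simpl. cont_tac.
Qed.
Lemma cont_yk x y f : cont_on dX edR S f -> cont_on dX ed3 S (fun w => yk x y (f w)).
Proof.
  intros. destruct x as [[x1 x2] x3]; destruct y as [[y1 y2] y3]. unfold yk; simpl. cont_tac.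
Qed.
Lemma cont_qadd f1 f2 : cont_on dX ed4 S f1 -> cont_on dX ed4 S f2 -> cont_on dX ed4 S (fun x => qadd (f1 x) (f2 x)).
Proof.
  intros. apply (cont_ext _ _ _ (fun x => qadd (exp4 (f1 x)) (exp4 (f2 x)))); [|intros; rewrite !exp4_id; auto].
  unfold qadd, exp4; simpl. cont_tac.
Qed.
Lemma cont_qscale f1 f2 : cont_on dX edR S f1 -> cont_on dX ed4 S f2 -> cont_on dX ed4 S (fun x => qscale (f1 x) (f2 x)).
Proof.
  intros. apply (cont_ext _ _ _ (fun x => qscale (f1 x) (exp4 (f2 x)))); [|intros; rewrite !exp4_id; auto].
  unfold qscale, exp4; simpl. cont_tac.
Qed.
Lemma cont_gram f : cont_on dX ed3 S f -> cont_on dX edR S (fun x => gram (f x)).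
Proof.
  intros. apply (cont_ext _ _ _ (fun x => gram (exp3 (f x)))); [|intros; rewrite !exp3_id; auto].
  unfold gram, exp3; simpl. cont_tac.
Qed.
Lemma cont_const4 (c : R4) : cont_on dX ed4 S (fun _ => c).
Proof. destruct c as [[[a b] c] d]. cont_tac. Qed.
Lemma cont_const3 (c : R3) : cont_on dX ed3 S (fun _ => c).
Proof. destruct c as [[a b] c]. cont_tac. Qed.
End S.

Lemma homeo_trans {X Y Z} (dX : X -> X -> R) (dY : Y -> Y -> R) (dZ : Z -> Z -> R) S T U :
  homeomorphic dX dY S T -> homeomorphic dY dZ T U -> homeomorphic dX dZ S U.
Proof.
  intros [f [g [h1 [h2 [h3 [h4 [h5 h6]]]]]]] [f' [g' [k1 [k2 [k3 [k4 [k5 k6]]]]]]].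
  exists (fun x => f' (f x)), (fun z => g (g' z)). repeat split; intros.
  - auto.
  - auto.
  - rewrite k3; auto.
  - rewrite h4; auto.
  - eapply cont_comp; eauto.
  - eapply cont_comp; eauto.
Qed.

Lemma lift {Xt} (dT : Xt -> Xt -> R) (T : Xt -> Prop) A B (F : R3*R3 -> Prop) f g sA sB :
  S2 A -> S2 B -> nonnegd dT ->
  (forall t, T t -> F (f t)) -> (forall z, F z -> T (g z)) ->
  (forall t, T t -> g (f t) = t) -> (forall z, F z -> f (g z) = z) ->
  cont_on ed33 dT F g ->
  (forall t, T t -> S3 (sA t) /\ S3 (sB t) /\ piX A (sA t) = fst (f t) /\ piX B (sB t) = snd (f t)) ->
  cont_on dT ed4 T sA -> cont_on dT ed4 T sB ->
  homeomorphic ed44 (dprod (dprod dT ed2) ed2)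
    (fun pq => S3xS3 pq /\ F (piX A (fst pq), piX B (snd pq)))
    (fun w => T (fst (fst w)) /\ circle (snd (fst w)) /\ circle (snd w)).
Proof.
  intros hA hB ndT hf hg hgf hfg cg hs csA csB.
  set (pi := fun pq : R4*R4 => (piX A (fst pq), piX B (snd pq))).
  exists (fun pq => ((g (pi pq), hc A (sA (g (pi pq))) (fst pq)), hc B (sB (g (pi pq))) (snd pq))).
  exists (fun w => (qmul (eU A (snd (fst w))) (sA (fst (fst w))), qmul (eU B (snd w)) (sB (fst (fst w))))).
  assert (key : forall pq, S3xS3 pq /\ F (pi pq) ->
     T (g (pi pq)) /\ piX A (sA (g (pi pq))) = piX A (fst pq) /\ piX B (sB (g (pi pq))) = piX B (snd pq)).
  { intros pq [[h1 h2] hF]. pose proof (hg _ hF) as hT. destruct (hs _ hT) as [_ [_ [e1 e2]]].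
    rewrite hfg in e1, e2 by auto. split; auto. }
  assert (key2 : forall w, T (fst (fst w)) /\ circle (snd (fst w)) /\ circle (snd w) ->
     pi (qmul (eU A (snd (fst w))) (sA (fst (fst w))), qmul (eU B (snd w)) (sB (fst (fst w)))) = f (fst (fst w))).
  { intros w [hT [c1 c2]]. destruct (hs _ hT) as [s1 [s2 [e1 e2]]].
    destruct (H2 A _ _ hA s1 c1) as [_ [E1 _]]. destruct (H2 B _ _ hB s2 c2) as [_ [E2 _]].
    unfold pi; simpl. rewrite E1, E2, e1, e2. destruct (f (fst (fst w))); auto. }
  split; [|split; [|split; [|split; [|split]]]].
  - intros pq [[h1 h2] hF]. destruct (key pq (conj (conj h1 h2) hF)) as [hT [e1 e2]].
    destruct (hs _ hT) as [s1 [s2 _]]. simpl. split; [exact hT|split].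
    + apply (H1 A _ _ hA s1 h1). auto.
    + apply (H1 B _ _ hB s2 h2). auto.
  - intros w Hw. pose proof (key2 w Hw) as E. destruct Hw as [hT [c1 c2]].
    destruct (hs _ hT) as [s1 [s2 _]]. split; [split; simpl; apply H2; auto|].
    change (F (pi (qmul (eU A (snd (fst w))) (sA (fst (fst w))), qmul (eU B (snd w)) (sB (fst (fst w)))))).
    rewrite E. apply hf. exact hT.
  - intros pq [[h1 h2] hF]. destruct (key pq (conj (conj h1 h2) hF)) as [hT [e1 e2]].
    destruct (hs _ hT) as [s1 [s2 _]].
    destruct (H1 A _ _ hA s1 h1 (eq_sym e1)) as [_ E1]. destruct (H1 B _ _ hB s2 h2 (eq_sym e2)) as [_ E2].
    destruct pq as [p q]; simpl in *. rewrite <- E1, <- E2. auto.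
  - intros w Hw. pose proof (key2 w Hw) as E. rewrite E, hgf by apply Hw.
    destruct Hw as [hT [c1 c2]]. destruct (hs _ hT) as [s1 [s2 _]].
    destruct (H2 A _ _ hA s1 c1) as [_ [_ E1]]. destruct (H2 B _ _ hB s2 c2) as [_ [_ E2]].
    cbn [fst snd]. rewrite E1, E2. destruct w as [[t u] v]; auto.
  -
    assert (cpi : cont_on ed44 ed33 (fun pq => S3xS3 pq /\ F (pi pq)) pi).
    { unfold pi. unfold ed33. apply cont_pair; try nn.
      - apply cont_piX. apply cont_fst_id.
      - apply cont_piX. apply cont_snd_id. }
    assert (cg' : cont_on ed44 dT (fun pq => S3xS3 pq /\ F (pi pq)) (fun pq => g (pi pq))).
    { eapply cont_comp; [exact cpi| |exact cg]. intros x hx; apply hx. }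
    assert (csA' : cont_on ed44 ed4 (fun pq => S3xS3 pq /\ F (pi pq)) (fun pq => sA (g (pi pq)))).
    { eapply cont_comp; [exact cg'| |exact csA]. intros x hx. apply hg, hx. }
    assert (csB' : cont_on ed44 ed4 (fun pq => S3xS3 pq /\ F (pi pq)) (fun pq => sB (g (pi pq)))).
    { eapply cont_comp; [exact cg'| |exact csB]. intros x hx. apply hg, hx. }
    apply cont_pair; [nn | unfold ed2; nn | | ].
    + apply cont_pair; [exact ndT | unfold ed2; nn | exact cg' | ].
      apply cont_hc; auto. apply cont_fst_id.
    + apply cont_hc; auto. apply cont_snd_id.
  - set (W := fun w : Xt * R2 * R2 => T (fst (fst w)) /\ circle (snd (fst w)) /\ circle (snd w)).
    assert (cA : cont_on (dprod (dprod dT ed2) ed2) ed4 W (fun w => sA (fst (fst w)))).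
    { eapply cont_comp; [| |exact csA]. 
      - apply cont_fstfst.
      - intros w hw; apply hw. }
    assert (cB : cont_on (dprod (dprod dT ed2) ed2) ed4 W (fun w => sB (fst (fst w)))).
    { eapply cont_comp; [| |exact csB]. 
      - apply cont_fstfst.
      - intros w hw; apply hw. }
    unfold ed44. apply cont_pair; try nn.
    + apply cont_qmul2; auto. apply cont_eU.
      apply cont_sndfst.
    + apply cont_qmul2; auto. apply cont_eU.
      apply cont_snd_id.
Qed.

Definition Fdata {Xt} (dT : Xt->Xt->R) (T : Xt -> Prop) (F : R3*R3 -> Prop) (f : Xt -> R3*R3) (g : R3*R3 -> Xt) :=
 (forall t, T t -> F (f t)) /\ (forall z, F z -> T (g z)) /\ (forall t, T t -> g (f t) = t) /\
 (forall z, F z -> f (g z) = z) /\ cont_on dT ed33 T f /\ cont_on ed33 dT F g.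
Definition Sdata {Xt} (dT : Xt->Xt->R) (T : Xt -> Prop) (A B : R3) (f : Xt -> R3*R3) (sA sB : Xt -> R4) :=
 (forall t, T t -> S3 (sA t) /\ S3 (sB t) /\ piX A (sA t) = fst (f t) /\ piX B (sB t) = snd (f t)) /\
 cont_on dT ed4 T sA /\ cont_on dT ed4 T sB.

Definition rel (x v x' y' : R3) : Prop :=
  let '(x1,x2,x3) := x in let '(v1,v2,v3) := v in let '(a1,a2,a3) := x' in let '(b1,b2,b3) := y' in
  a1^2+a2^2 = x1^2+x2^2 /\ a3 = x3 /\ b3 = v3 /\ a1*b1+a2*b2 = x1*v1+x2*v2 /\ a1*b2-a2*b1 = x1*v2-x2*v1.

Definition mm (x : R3) : R := let '(x1,x2,x3) := x in x1^2+x2^2.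

Lemma orbit (x v x' y' : R3) : 0 < mm x -> rel x v x' y' -> rot (ang x x') x = x' /\ rot (ang x x') v = y'.
Proof.
  destruct x as [[x1 x2] x3]; destruct v as [[v1 v2] v3]; destruct x' as [[a1 a2] a3]; destruct y' as [[b1 b2] b3].
  unfold mm, rel, rot, ang; intros hm [e1 [e2 [e3 [e4 e5]]]]. subst a3 b3.
  split; peq; auto.
  - field. lra.
  - field. lra.
  - assert (E : (x1*a1+x2*a2)*v1 - (x1*a2-x2*a1)*v2 = b1*(x1^2+x2^2)).
    { apply (lc3 _ _ b1 (a1^2+a2^2 - (x1^2+x2^2)) (-a1) (a1*b1+a2*b2 - (x1*v1+x2*v2)) a2 (a1*b2-a2*b1 - (x1*v2-x2*v1))); [lra|lra|lra|ring]. }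
    replace b1 with (b1*(x1^2+x2^2)/(x1^2+x2^2)) by (field; lra). rewrite <- E. field. lra.
  - assert (E : (x1*a2-x2*a1)*v1 + (x1*a1+x2*a2)*v2 = b2*(x1^2+x2^2)).
    { apply (lc3 _ _ b2 (a1^2+a2^2 - (x1^2+x2^2)) (-a2) (a1*b1+a2*b2 - (x1*v1+x2*v2)) (-a1) (a1*b2-a2*b1 - (x1*v2-x2*v1))); [lra|lra|lra|ring]. }
    replace b2 with (b2*(x1^2+x2^2)/(x1^2+x2^2)) by (field; lra). rewrite <- E. field. lra.
Qed.

Lemma fibE3 x y z : nubar_fibre E3 (nubar E3 (x,y)) z <->
  S2 (fst z) /\ S2 (snd z) /\ snd (fst z) = snd x /\ snd (snd z) = snd y /\ dot (fst z) (snd z) = dot x y.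
Proof.
  destruct z as [z1 z2]. destruct x as [[x1 x2] x3]; destruct y as [[y1 y2] y3];
  destruct z1 as [[a1 a2] a3]; destruct z2 as [[b1 b2] b3].
  unfold nubar_fibre, S2xS2, nubar, E3, dot; simpl. split.
  - intros [[h1 h2] e]. injection e; intros. repeat split; auto; lra.
  - intros [h1 [h2 [e1 [e2 e3]]]]. repeat split; auto. rewrite e3. f_equal; [f_equal|]; lra.
Qed.

Lemma rel_of (x v z1 z2 : R3) : S2 x -> S2 z1 -> snd z1 = snd x -> snd z2 = snd v -> dot z1 z2 = dot x v ->
  det2 (z1,z2) = det2 (x,v) -> rel x v z1 z2.
Proof.
  destruct x as [[x1 x2] x3]; destruct v as [[v1 v2] v3];
  destruct z1 as [[a1 a2] a3]; destruct z2 as [[b1 b2] b3].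
  unfold S2, rel, dot, det2; simpl. intros h1 h2 e1 e2 e3 e4. subst. repeat split; auto; lra.
Qed.

Lemma det2_sq x y z : S2 x -> S2 y -> nubar_fibre E3 (nubar E3 (x,y)) z -> det2 z ^2 = det2 (x,y) ^2.
Proof.
  intros hx hy hz. apply fibE3 in hz. destruct hz as [h1 [h2 [e1 [e2 e3]]]].
  destruct z as [z1 z2]; destruct x as [[x1 x2] x3]; destruct y as [[y1 y2] y3];
  destruct z1 as [[a1 a2] a3]; destruct z2 as [[b1 b2] b3].
  unfold S2 in *; cbn [fst snd det2 dot] in *. subst.
  assert (L1 : (a1*b2-a2*b1)^2 = (a1^2+a2^2)*(b1^2+b2^2) - (a1*b1+a2*b2)^2) by ring.
  assert (L2 : (x1*y2-x2*y1)^2 = (x1^2+x2^2)*(y1^2+y2^2) - (x1*y1+x2*y2)^2) by ring.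
  rewrite L1, L2. replace (a1^2+a2^2) with (1 - x3^2) by lra. replace (b1^2+b2^2) with (1 - y3^2) by lra.
  replace (x1^2+x2^2) with (1 - x3^2) by lra. replace (y1^2+y2^2) with (1 - y3^2) by lra.
  replace (a1*b1+a2*b2) with (x1*y1+x2*y2) by lra. ring.
Qed.

Lemma rot_S2 cs z : circle cs -> S2 z -> S2 (rot cs z).
Proof. destruct cs as [c s]; unfold circle; destruct z as [[a b] c0]; unfold S2, rot, dot; simpl; intros hcs h.
  apply (lc2 _ _ 1 (a*a+b*b+c0*c0-1) (a^2+b^2) (c^2+s^2-1)); [lra|lra|ring]. Qed.
Lemma rot_dot (cs : R2) (a b : R3) : circle cs -> dot (rot cs a) (rot cs b) = dot a b.
Proof. destruct cs as [c s]; unfold circle; destruct a as [[a0 b0] c0]; destruct b as [[a1 b1] c1]; unfold rot, dot; simpl; intros hcs.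
  apply (lc1 _ _ (a0*a1+b0*b1) (c^2+s^2-1)); [lra|ring]. Qed.
Lemma rot_snd cs a : snd (rot cs a) = snd a.
Proof. destruct cs as [c s]; destruct a as [[a0 b0] c0]; reflexivity. Qed.
Lemma rot_det2 (cs : R2) (a b : R3) : circle cs -> det2 (rot cs a, rot cs b) = det2 (a,b).
Proof. destruct cs as [c s]; unfold circle; destruct a as [[a0 b0] c0]; destruct b as [[a1 b1] c1]; unfold rot, det2; simpl; intros hcs.
  apply (lc1 _ _ (a0*b1-b0*a1) (c^2+s^2-1)); [lra|ring]. Qed.
Lemma ang_rot cs u : circle cs -> 0 < mm u -> ang u (rot cs u) = cs.
Proof. destruct cs as [c s]; unfold circle; destruct u as [[a0 b0] c0]; unfold mm, ang, rot; cbv beta iota zeta; intros hcs h.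
  f_equal; field; lra. Qed.

Lemma ang_circle u z : 0 < mm u -> (let '(z1,z2,_) := z in z1^2+z2^2) = mm u -> circle (ang u z).
Proof.
  destruct u as [[u1 u2] u3]; destruct z as [[z1 z2] z3]. unfold mm, ang, circle. intros h e.
  assert (L : (u1*z1+u2*z2)^2 + (u1*z2-u2*z1)^2 = (u1^2+u2^2)*(z1^2+z2^2)) by ring.
  rewrite e in L.
  transitivity (((u1*z1+u2*z2)^2 + (u1*z2-u2*z1)^2)/((u1^2+u2^2)*(u1^2+u2^2))).
  - field. lra.
  - rewrite L. field. lra.
Qed.

Lemma yk_dot_self x y k : 0 < mm x -> dot (yk x y k) (yk x y k) = dot y y + 4*k*(k-1)*(det2 (x,y))^2 / mm x.
Proof. intro hm. revert hm. destruct x as [[x1 x2] x3]; destruct y as [[y1 y2] y3]. unfold yk, dot, det2, mm; cbv beta iota zeta. intro h.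
  field. lra. Qed.
Lemma yk0 x y : 0 < mm x -> yk x y 0 = y.
Proof. destruct x as [[x1 x2] x3]; destruct y as [[y1 y2] y3]. unfold yk, mm; cbv beta iota zeta. intro h.
  peq; field; lra. Qed.
Lemma yk_dot x y k : 0 < mm x -> dot x (yk x y k) = dot x y.
Proof. destruct x as [[x1 x2] x3]; destruct y as [[y1 y2] y3]. unfold yk, dot, mm; cbv beta iota zeta. intro h.
  field. lra. Qed.
Lemma yk_snd x y k : snd (yk x y k) = snd y.
Proof. destruct x as [[x1 x2] x3]; destruct y as [[y1 y2] y3]. reflexivity. Qed.
Lemma yk_det x y k : 0 < mm x -> det2 (x, yk x y k) = (1 - 2*k) * det2 (x,y).
Proof. destruct x as [[x1 x2] x3]; destruct y as [[y1 y2] y3]. unfold yk, det2, mm; cbv beta iota zeta. intro h.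
  field. lra. Qed.
Lemma yk_S2 x y k : 0 < mm x -> k = 0 \/ k = 1 -> S2 y -> S2 (yk x y k).
Proof. intros hm hk hy. unfold S2 in *. rewrite yk_dot_self, hy by auto. destruct hk; subst; field; lra. Qed.

Lemma plan_eq a b : S2 a -> S2 b -> snd a = snd b -> (let '(z1,z2,_) := a in z1^2+z2^2) = mm b.
Proof. destruct a as [[a1 a2] a3]; destruct b as [[b1 b2] b3]; unfold S2, dot, mm; simpl. intros; subst; lra. Qed.

Lemma det2_swap (a b : R3) : det2 (b,a) = - det2 (a,b).
Proof. destruct a as [[a1 a2] a3]; destruct b as [[b1 b2] b3]; unfold det2; simpl; ring. Qed.
Lemma dot_comm (a b : R3) : dot a b = dot b a.
Proof. destruct a as [[a1 a2] a3]; destruct b as [[b1 b2] b3]; unfold dot; simpl; ring. Qed.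

Lemma mm_pos (a b : R3) : det2 (a,b) <> 0 -> 0 < mm a.
Proof. destruct a as [[a1 a2] a3]; destruct b as [[b1 b2] b3]; unfold det2, mm; simpl. intro h.
  destruct (Req_dec (a1^2+a2^2) 0) as [e|e].
  - exfalso. apply h. assert (a1 = 0) by nra. assert (a2 = 0) by nra. subst. ring.
  - assert (0 <= a1^2) by apply pow2_ge_0. assert (0 <= a2^2) by apply pow2_ge_0. lra.
Qed.

Lemma sq_cases a b : a^2 = b^2 -> a = b \/ a = -b.
Proof. intro h. assert ((a-b)*(a+b) = 0) by (ring_simplify; lra).
  destruct (Rmult_integral _ _ H); [left|right]; lra. Qed.

Lemma data2_E3 A B x y (bx : bool) : S2 A -> S2 B -> S2 x -> S2 y -> det2 (x,y) = 0 ->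
  0 < mm (if bx then x else y) ->
  exists f g sA sB, Fdata ed2 circle (nubar_fibre E3 (nubar E3 (x,y))) f g /\ Sdata ed2 circle A B f sA sB.
Proof.
  intros hA hB hx hy hD hm.
  destruct (Hs A x hA hx) as [p0 [hp0 ep0]]. destruct (Hs B y hB hy) as [q0 [hq0 eq0]].
  set (u := if bx then x else y).
  set (sel := fun z : R3*R3 => if bx then fst z else snd z).
  exists (fun cs => (rot cs x, rot cs y)), (fun z => ang u (sel z)),
    (fun cs => sect A p0 cs), (fun cs => sect B q0 cs).
  assert (Fz : forall z, nubar_fibre E3 (nubar E3 (x,y)) z -> det2 z = 0).
  { intros z hz. pose proof (det2_sq x y z hx hy hz) as e. rewrite hD in e.
    assert (det2 z * det2 z = 0) by lra. destruct (Rmult_integral _ _ H); auto. }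
  unfold Fdata, Sdata; repeat match goal with |- _ /\ _ => split end.
  - intros cs hcs. apply fibE3. simpl. repeat split.
    + apply rot_S2; auto. + apply rot_S2; auto. + apply rot_snd. + apply rot_snd. + apply rot_dot; auto.
  - intros z hz. pose proof hz as hz'. apply fibE3 in hz'. destruct hz' as [h1 [h2 [e1 [e2 e3]]]].
    apply ang_circle; auto. unfold sel, u. destruct bx; apply plan_eq; auto.
  - intros cs hcs. simpl. unfold sel, u. destruct bx; simpl; apply ang_rot; auto.
  - intros z hz. pose proof (Fz z hz) as d0. pose proof hz as hz'. apply fibE3 in hz'. destruct hz' as [h1 [h2 [e1 [e2 e3]]]].
    unfold sel, u in *. destruct z as [z1 z2]; cbn [fst snd] in *. destruct bx.
    + destruct (orbit x y z1 z2 hm) as [o1 o2].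
      { apply rel_of; auto. transitivity 0; [exact d0|symmetry; exact hD]. }
      rewrite o1, o2. auto.
    + destruct (orbit y x z2 z1 hm) as [o1 o2].
      { apply rel_of; auto.
        - rewrite (dot_comm z2 z1), (dot_comm y x). exact e3.
        - pose proof (det2_swap z1 z2) as s1. pose proof (det2_swap x y) as s2.
          transitivity (- det2 (z1,z2)); [exact s1|]. transitivity (- det2 (x,y)); [|symmetry; exact s2].
          f_equal. transitivity 0; [exact d0|symmetry; exact hD]. }
      rewrite o1, o2. auto.
  - unfold ed33. apply cont_pair; try (unfold ed3; nn).
    + apply cont_rot. apply cont_id. apply cont_const3.
    + apply cont_rot. apply cont_id. apply cont_const3.
  - apply cont_ang. unfold sel. destruct bx; [apply cont_fst_id|apply cont_snd_id].
  - intros t H. split; [|split; [|split]].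
    + apply sect_props; auto.
    + apply sect_props; auto.
    + simpl. rewrite (proj2 (sect_props A p0 t hA hp0 H)). rewrite ep0. auto.
    + simpl. rewrite (proj2 (sect_props B q0 t hB hq0 H)). rewrite eq0. auto.
  - apply cont_sect. apply cont_const4. apply cont_id.
  - apply cont_sect. apply cont_const4. apply cont_id.
Qed.

Lemma qk0 a b : qadd (qscale (1-0) a) (qscale 0 b) = a.
Proof. destruct a as [[[? ?] ?] ?]; destruct b as [[[? ?] ?] ?]; unfold qadd, qscale; peq; ring. Qed.
Lemma qk1 a b : qadd (qscale (1-1) a) (qscale 1 b) = b.
Proof. destruct a as [[[? ?] ?] ?]; destruct b as [[[? ?] ?] ?]; unfold qadd, qscale; peq; ring. Qed.

Lemma data3_E3 A B x y : S2 A -> S2 B -> S2 x -> S2 y -> det2 (x,y) <> 0 ->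
  exists f g sA sB, Fdata d_two_circles two_circles (nubar_fibre E3 (nubar E3 (x,y))) f g /\
                    Sdata d_two_circles two_circles A B f sA sB.
Proof.
  intros hA hB hx hy hD. pose proof (mm_pos x y hD) as hm.
  set (D := det2 (x,y)) in *.
  destruct (Hs A x hA hx) as [p0 [hp0 ep0]]. destruct (Hs B y hB hy) as [q0 [hq0 eq0]].
  assert (hy1 : S2 (yk x y 1)) by (apply yk_S2; auto).
  destruct (Hs B (yk x y 1) hB hy1) as [q1 [hq1 eq1]].
  set (qk := fun k => qadd (qscale (1-k) q0) (qscale k q1)).
  exists (fun t => (rot (fst t) x, rot (fst t) (yk x y (snd t)))),
    (fun z => (ang x (fst z), (D - det2 z)/(2*D))),
    (fun t => sect A p0 (fst t)), (fun t => sect B (qk (snd t)) (fst t)).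
  unfold Fdata, Sdata; repeat match goal with |- _ /\ _ => split end.
  - intros [cs k] [hcs hk]. cbn [fst snd] in *. apply fibE3. cbn [fst snd]. repeat split.
    + apply rot_S2; auto.
    + apply rot_S2; auto. apply yk_S2; auto.
    + apply rot_snd.
    + rewrite rot_snd. apply yk_snd.
    + rewrite rot_dot by auto. apply yk_dot; auto.
  - intros z hz. pose proof hz as hz'. apply fibE3 in hz'. destruct hz' as [h1 [h2 [e1 [e2 e3]]]].
    split; cbn [fst snd].
    + apply ang_circle; auto. apply plan_eq; auto.
    + pose proof (det2_sq x y z hx hy hz) as sq. fold D in sq. destruct (sq_cases _ _ sq) as [e|e]; rewrite e.
      * left. field. auto.
      * right. field. auto.
  - intros [cs k] [hcs hk]. cbn [fst snd] in *. f_equal.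
    + apply ang_rot; auto.
    + rewrite rot_det2, yk_det by auto. fold D. field. auto.
  - intros z hz. pose proof hz as hz'. apply fibE3 in hz'. destruct hz' as [h1 [h2 [e1 [e2 e3]]]].
    pose proof (det2_sq x y z hx hy hz) as sq. fold D in sq.
    destruct z as [z1 z2]; cbn [fst snd] in *.
    destruct (sq_cases _ _ sq) as [e|e].
    + replace ((D - det2 (z1,z2))/(2*D)) with 0 by (rewrite e; field; auto).
      rewrite yk0 by auto.
      destruct (orbit x y z1 z2 hm) as [o1 o2]; [apply rel_of; auto|]. rewrite o1, o2; auto.
    + replace ((D - det2 (z1,z2))/(2*D)) with 1 by (rewrite e; field; auto).
      destruct (orbit x (yk x y 1) z1 z2 hm) as [o1 o2].
      { apply rel_of; auto.
        - rewrite yk_snd. auto.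
        - rewrite yk_dot by auto. auto.
        - rewrite yk_det by auto. fold D. rewrite e. ring. }
      rewrite o1, o2; auto.
  - unfold ed33, d_two_circles. apply cont_pair; try (unfold ed3; nn).
    + apply cont_rot. apply cont_fst_id. apply cont_const3.
    + apply cont_rot. apply cont_fst_id. apply cont_yk. apply cont_snd_id.
  - unfold d_two_circles. apply cont_pair; try (unfold ed2; nn).
    + apply cont_ang. apply cont_fst_id.
    + unfold Rdiv. apply cont_mult; [apply cont_minus; [apply cont_const| apply cont_det2; apply cont_id]| apply cont_const].
  - intros [cs k] [hcs hk]. cbn [fst snd] in *.
    assert (eqk : piX B (qk k) = yk x y k /\ S3 (qk k)).
    { unfold qk. destruct hk; subst k; [rewrite qk0, yk0 by auto|rewrite qk1]; auto. }
    destruct eqk as [eqk sk].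
    split; [|split; [|split]].
    + apply sect_props; auto.
    + apply sect_props; auto.
    + rewrite (proj2 (sect_props A p0 cs hA hp0 hcs)). rewrite ep0. auto.
    + rewrite (proj2 (sect_props B (qk k) cs hB sk hcs)). rewrite eqk. auto.
  - apply cont_sect. apply cont_const4. unfold d_two_circles. apply cont_fst_id.
  - apply cont_sect.
    + unfold qk. apply cont_qadd; apply cont_qscale; try apply cont_const4.
      * apply cont_minus; [apply cont_const| apply cont_snd_id].
      * apply cont_snd_id.
    + unfold d_two_circles. apply cont_fst_id.
Qed.

Lemma homeo_ext {X Y} (dX : X -> X -> R) (dY : Y -> Y -> R) S T S' T' :
  (forall x, S x <-> S' x) -> (forall y, T y <-> T' y) -> homeomorphic dX dY S T -> homeomorphic dX dY S' T'.
Proof.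
  intros eS eT [f [g [h1 [h2 [h3 [h4 [h5 h6]]]]]]]. exists f, g. repeat split; intros.
  - apply eT, h1, eS; auto.
  - apply eS, h2, eT; auto.
  - apply h3, eS; auto.
  - apply h4, eT; auto.
  - eapply cont_sub; [exact h5|]. intros; apply eS; auto.
  - eapply cont_sub; [exact h6|]. intros; apply eT; auto.
Qed.

Lemma homeo_of_data {Xt} (dT : Xt -> Xt -> R) T F f g : Fdata dT T F f g -> homeomorphic ed33 dT F T.
Proof. intros [h1 [h2 [h3 [h4 [h5 h6]]]]]. exists g, f. repeat split; auto. Qed.

Lemma nu_fibre_eq A B C N pq : S2 A -> S2 B ->
  (nu_fibre A B C N pq <-> S3xS3 pq /\ nubar_fibre C N (piX A (fst pq), piX B (snd pq))).
Proof.
  intros hA hB. destruct pq as [p q]. unfold nu_fibre, nubar_fibre, S2xS2, S3xS3, nu; cbn [fst snd].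
  split.
  - intros [[h1 h2] e]. repeat split; auto; apply S2_piX; auto.
  - intros [[h1 h2] [_ e]]. auto.
Qed.

Lemma nu_homeo {Xt} (dT : Xt -> Xt -> R) T A B C N f g sA sB :
  S2 A -> S2 B -> nonnegd dT -> Fdata dT T (nubar_fibre C N) f g -> Sdata dT T A B f sA sB ->
  homeomorphic ed44 (dprod (dprod dT ed2) ed2) (nu_fibre A B C N)
    (fun w => T (fst (fst w)) /\ circle (snd (fst w)) /\ circle (snd w)).
Proof.
  intros hA hB nd [h1 [h2 [h3 [h4 [h5 h6]]]]] [s1 [s2 s3]].
  pose proof (lift dT T A B (nubar_fibre C N) f g sA sB hA hB nd h1 h2 h3 h4 h6 s1 s2 s3) as L.
  refine (homeo_ext _ _ _ _ _ _ _ _ L); [|intro; reflexivity].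
  intro pq. symmetry. apply nu_fibre_eq; auto.
Qed.

Section Tr.
Lemma RiR z r : S3 r -> piX (piX z r) (qconj r) = z.
Proof. intro h. apply S3_qn in h. rewrite piX_inv1, h. replace (1^2) with 1 by ring. apply vscale1. Qed.
Lemma RRi z r : S3 r -> piX (piX z (qconj r)) r = z.
Proof. intro h. apply S3_qn in h. rewrite piX_inv2, h. replace (1^2) with 1 by ring. apply vscale1. Qed.
Lemma dotR u v r : S3 r -> dot (piX u r) (piX v r) = dot u v.
Proof. intro h. apply S3_qn in h. rewrite piX_dot, h. ring. Qed.
End Tr.

Lemma fib_transport C N r z : S3 r -> piX C r = E3 ->
  (nubar_fibre C N z <-> nubar_fibre E3 N (piX (fst z) r, piX (snd z) r)).
Proof.
  intros hr hC. destruct z as [z1 z2]. unfold nubar_fibre, S2xS2, nubar, S2; cbn [fst snd].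
  rewrite <- hC, !dotR by auto. tauto.
Qed.

Lemma transport {Xt} (dT : Xt -> Xt -> R) T A B C N f g sA sB r : S3 r -> piX C r = E3 ->
  Fdata dT T (nubar_fibre E3 N) f g -> Sdata dT T A B f sA sB ->
  Fdata dT T (nubar_fibre C N) (fun t => (piX (fst (f t)) (qconj r), piX (snd (f t)) (qconj r)))
                               (fun z => g (piX (fst z) r, piX (snd z) r)) /\
  Sdata dT T A B (fun t => (piX (fst (f t)) (qconj r), piX (snd (f t)) (qconj r)))
                 (fun t => qmul (sA t) (qconj r)) (fun t => qmul (sB t) (qconj r)).
Proof.
  intros hr hC [h1 [h2 [h3 [h4 [h5 h6]]]]] [s1 [s2 s3]]. 
  set (Rp := fun z : R3*R3 => (piX (fst z) r, piX (snd z) r)).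
  set (Rip := fun z : R3*R3 => (piX (fst z) (qconj r), piX (snd z) (qconj r))).
  assert (RRip : forall z, Rp (Rip z) = z).
  { intros [a b]. unfold Rp, Rip; cbn [fst snd]. rewrite !RRi; auto. }
  assert (RipR : forall z, Rip (Rp z) = z).
  { intros [a b]. unfold Rp, Rip; cbn [fst snd]. rewrite !RiR; auto. }
  assert (FC : forall z, nubar_fibre C N z <-> nubar_fibre E3 N (Rp z)) by (intro; apply fib_transport; auto).
  change (Fdata dT T (nubar_fibre C N) (fun t => Rip (f t)) (fun z => g (Rp z)) /\
    Sdata dT T A B (fun t => Rip (f t)) (fun t => qmul (sA t) (qconj r)) (fun t => qmul (sB t) (qconj r))).
  unfold Fdata, Sdata; repeat match goal with |- _ /\ _ => split end.
  - intros t ht. apply (proj2 (FC _)). rewrite RRip. auto.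
  - intros z hz. apply h2, (proj1 (FC z)), hz.
  - intros t ht. rewrite RRip. auto.
  - intros z hz. rewrite h4 by (apply (proj1 (FC z)); auto). apply RipR.
  - unfold Rip. unfold ed33. apply cont_pair; try (unfold ed3; nn).
    + apply cont_piXv. apply (cont_fst_of _ _ ed3). exact h5.
    + apply cont_piXv. apply (cont_snd_of _ ed3). exact h5.
  - eapply (cont_comp _ _ _ _ _ Rp); [| intros z hz; exact (proj1 (FC z) hz) | exact h6].
    unfold Rp, ed33. apply cont_pair; try (unfold ed3; nn).
    + apply cont_piXv. apply cont_fst_id.
    + apply cont_piXv. apply cont_snd_id.
  - intros t ht. destruct (s1 t ht) as [a1 [a2 [a3 a4]]]. unfold Rip; cbn [fst snd].
    repeat split; try apply S3_mul; try apply S3_conj; auto.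
    + rewrite piX_mul, a3. auto.
    + rewrite piX_mul, a4. auto.
  - apply cont_qmul2; auto. apply cont_const4.
  - apply cont_qmul2; auto. apply cont_const4.
Qed.

Lemma gram_hom x y C : dot x x * dot y y * dot C C + 2 * dot x y * dot x C * dot y C
  - dot x y ^2 * dot C C - dot x C ^2 * dot y y - dot y C ^2 * dot x x = (det3 x y C)^2.
Proof. destr; unfold dot, det3, cross; simpl; ring. Qed.

Lemma gram_id x y C : S2 x -> S2 y -> S2 C -> gram (nubar C (x,y)) = (det3 x y C)^2.
Proof. unfold S2; intros hx hy hC. rewrite <- gram_hom, hx, hy, hC. unfold gram, nubar; cbn [fst snd]. ring. Qed.

Lemma Forall3 (P : R -> Prop) a b c : Forall P [a;b;c] -> P a /\ P b /\ P c.
Proof. intro h. split; [exact (Forall_inv h)|split; [exact (Forall_inv (Forall_inv_tail h))|exact (Forall_inv (Forall_inv_tail (Forall_inv_tail h)))]]. Qed.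

Lemma Forall2e (P : R -> Prop) a b : Forall P [a;b] -> P a /\ P b.
Proof. intro h. split; [exact (Forall_inv h)|exact (Forall_inv (Forall_inv_tail h))]. Qed.

Lemma in_span1 b1 v : in_span [b1] v -> exists c, v = vscale c b1.
Proof. intros [cs [l e]]. destruct cs as [|c [|]]; try discriminate. exists c. rewrite <- e. simpl. destr; unf; peq; ring. Qed.
Lemma in_span2 b1 b2 v : in_span [b1;b2] v -> exists c1 c2, v = vadd (vscale c1 b1) (vscale c2 b2).
Proof. intros [cs [l e]]. destruct cs as [|c1 [|c2 [|]]]; try discriminate. exists c1, c2. rewrite <- e. simpl. destr; unf; peq; ring. Qed.
Lemma in_span3 b1 b2 b3 v : in_span [b1;b2;b3] v -> exists c1 c2 c3, v = vadd (vscale c1 b1) (vadd (vscale c2 b2) (vscale c3 b3)).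
Proof. intros [cs [l e]]. destruct cs as [|c1 [|c2 [|c3 [|]]]]; try discriminate. exists c1, c2, c3. rewrite <- e. simpl. destr; unf; peq; ring. Qed.
Lemma span_x x y C : in_span [x;y;C] x.
Proof. exists [1;0;0]. split; auto. simpl. destr; unf; peq; ring. Qed.
Lemma span_y x y C : in_span [x;y;C] y.
Proof. exists [0;1;0]. split; auto. simpl. destr; unf; peq; ring. Qed.
Lemma span_C x y C : in_span [x;y;C] C.
Proof. exists [0;0;1]. split; auto. simpl. destr; unf; peq; ring. Qed.
Lemma span_b1 (b1 b2 : R3) : in_span [b1;b2] b1.
Proof. exists [1;0]. split; auto. simpl. destr; unf; peq; ring. Qed.
Lemma span_b2 (b1 b2 : R3) : in_span [b1;b2] b2.
Proof. exists [0;1]. split; auto. simpl. destr; unf; peq; ring. Qed.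
Lemma span_b1' (b1 b2 b3 : R3) : in_span [b1;b2;b3] b1.
Proof. exists [1;0;0]. split; auto. simpl. destr; unf; peq; ring. Qed.
Lemma span_b2' (b1 b2 b3 : R3) : in_span [b1;b2;b3] b2.
Proof. exists [0;1;0]. split; auto. simpl. destr; unf; peq; ring. Qed.
Lemma span_b3' (b1 b2 b3 : R3) : in_span [b1;b2;b3] b3.
Proof. exists [0;0;1]. split; auto. simpl. destr; unf; peq; ring. Qed.
Lemma span_b0 (b1 : R3) : in_span [b1] b1.
Proof. exists [1]. split; auto. simpl. destr; unf; peq; ring. Qed.

Lemma zero_vec (v : R3) : dot v v = 0 -> v = vzero.
Proof. destruct v as [[a b] c]; unfold dot, vzero; simpl; intro h.
  assert (a = 0) by nra. assert (b = 0) by nra. assert (c = 0) by nra. subst; auto. Qed.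

Lemma span1_par x y C : S2 x -> S2 y -> S2 C -> span_dim [x;y;C] 1 ->
  exists lx ly, (lx = 1 \/ lx = -1) /\ (ly = 1 \/ ly = -1) /\ x = vscale lx C /\ y = vscale ly C.
Proof.
  intros hx hy hC [b [lb [ind sp]]]. destruct b as [|b1 [|]]; try discriminate.
  destruct (in_span1 _ _ (proj2 (sp x) (span_x x y C))) as [cx ex].
  destruct (in_span1 _ _ (proj2 (sp y) (span_y x y C))) as [cy ey].
  destruct (in_span1 _ _ (proj2 (sp C) (span_C x y C))) as [cc ec].
  assert (nz : cc <> 0).
  { intro e. subst cc. unfold S2 in hC. rewrite ec in hC. destr; unf. lra. }
  assert (par : forall v c, v = vscale c b1 -> S2 v -> exists l, (l = 1 \/ l = -1) /\ v = vscale l C).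
  { intros v c ev hv. exists (c/cc).
    assert (E : v = vscale (c/cc) C).
    { rewrite ev, ec. destr; unf; peq; field; auto. }
    split; auto. unfold S2 in hv, hC. rewrite E in hv.
    assert (D : dot (vscale (c/cc) C) (vscale (c/cc) C) = (c/cc)^2 * dot C C) by (destr; unf; ring).
    rewrite D, hC in hv. apply sq_cases. lra. }
  destruct (par x cx ex hx) as [lx [h1 h2]]. destruct (par y cy ey hy) as [ly [h3 h4]].
  exists lx, ly. auto.
Qed.

Lemma span2_props x y C : S2 x -> S2 y -> S2 C -> span_dim [x;y;C] 2 ->
  det3 x y C = 0 /\ ~ ((exists lx, x = vscale lx C) /\ (exists ly, y = vscale ly C)).
Proof.
  intros hx hy hC [b [lb [ind sp]]]. destruct b as [|b1 [|b2 [|]]]; try discriminate.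
  split.
  - destruct (in_span2 _ _ _ (proj2 (sp x) (span_x x y C))) as [a1 [a2 ex]].
    destruct (in_span2 _ _ _ (proj2 (sp y) (span_y x y C))) as [c1 [c2 ey]].
    destruct (in_span2 _ _ _ (proj2 (sp C) (span_C x y C))) as [d1 [d2 ec]].
    rewrite ex, ey, ec. destr; unf; unfold det3, cross; simpl; ring.
  - intros [[lx ex] [ly ey]].
    assert (pb : forall v, in_span [b1;b2] v -> exists n, v = vscale n C).
    { intros v hv. destruct (in_span3 _ _ _ _ (proj1 (sp v) hv)) as [c1 [c2 [c3 e]]].
      exists (c1*lx + c2*ly + c3). rewrite e, ex, ey. destr; unf; peq; ring. }
    destruct (pb b1 (span_b1 b1 b2)) as [n1 e1]. destruct (pb b2 (span_b2 b1 b2)) as [n2 e2].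
    pose proof (ind [n2; -n1] eq_refl) as I1.
    assert (Z1 : lincomb [n2; -n1] [b1;b2] = vzero) by (simpl; rewrite e1, e2; destr; unf; peq; ring).
    apply I1 in Z1. apply Forall2e in Z1. destruct Z1 as [_ Z1].
    assert (n1 = 0) by lra. subst n1.
    pose proof (ind [1;0] eq_refl) as I2.
    assert (Z2 : lincomb [1; 0] [b1;b2] = vzero) by (simpl; rewrite e1; destr; unf; peq; ring).
    apply I2 in Z2. apply Forall2e in Z2. destruct Z2. lra.
Qed.

Lemma det_lin (a1 a2 a3 b1 b2 b3 c1 c2 c3 : R) x y C :
  det3 (vadd (vscale a1 x) (vadd (vscale a2 y) (vscale a3 C)))
       (vadd (vscale b1 x) (vadd (vscale b2 y) (vscale b3 C)))
       (vadd (vscale c1 x) (vadd (vscale c2 y) (vscale c3 C)))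
  = (a1*(b2*c3-b3*c2) - a2*(b1*c3-b3*c1) + a3*(b1*c2-b2*c1)) * det3 x y C.
Proof. destr; unf; unfold det3, cross; simpl; ring. Qed.

Lemma indep3_det b1 b2 b3 : lin_indep [b1;b2;b3] -> det3 b1 b2 b3 <> 0.
Proof.
  intros ind D.
  assert (idz : forall z, vscale (det3 b1 b2 b3) z =
     lincomb [dot z (cross b2 b3); dot z (cross b3 b1); dot z (cross b1 b2)] [b1;b2;b3]).
  { intro z. simpl. destr; unf; unfold det3, cross; simpl; peq; ring. }
  set (n3 := cross b1 b2).
  pose proof (idz n3) as E. rewrite D in E.
  assert (Z : lincomb [dot n3 (cross b2 b3); dot n3 (cross b3 b1); dot n3 (cross b1 b2)] [b1;b2;b3] = vzero).
  { rewrite <- E. destr; unf; peq; ring. }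
  apply ind in Z; [|reflexivity]. apply Forall3 in Z. destruct Z as [_ [_ Z]].
  fold n3 in Z. apply zero_vec in Z.
  assert (Z2 : lincomb [dot b2 b2; - dot b1 b2; 0] [b1;b2;b3] = vzero).
  { transitivity (cross b2 n3). - unfold n3. simpl. destr; unf; unfold cross; simpl; peq; ring.
    - rewrite Z. destr; unf; unfold cross; simpl; peq; ring. }
  apply ind in Z2; [|reflexivity]. apply Forall3 in Z2. destruct Z2 as [Z2 _].
  apply zero_vec in Z2.
  assert (Z3 : lincomb [0; 1; 0] [b1;b2;b3] = vzero).
  { simpl. rewrite Z2. destr; unf; peq; ring. }
  apply ind in Z3; [|reflexivity]. apply Forall3 in Z3. destruct Z3 as [_ [Z3 _]]. lra.
Qed.

Lemma span3_det x y C : span_dim [x;y;C] 3 -> det3 x y C <> 0.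
Proof.
  intros [b [lb [ind sp]]] D. destruct b as [|b1 [|b2 [|b3 [|]]]]; try discriminate.
  destruct (in_span3 _ _ _ _ (proj1 (sp b1) (span_b1' b1 b2 b3))) as [a1 [a2 [a3 e1]]].
  destruct (in_span3 _ _ _ _ (proj1 (sp b2) (span_b2' b1 b2 b3))) as [c1 [c2 [c3 e2]]].
  destruct (in_span3 _ _ _ _ (proj1 (sp b3) (span_b3' b1 b2 b3))) as [d1 [d2 [d3 e3]]].
  apply (indep3_det b1 b2 b3 ind). rewrite e1, e2, e3, det_lin, D. ring.
Qed.

Lemma par_unique z C l : S2 z -> S2 C -> dot z C = l -> l^2 = 1 -> z = vscale l C.
Proof.
  destruct z as [[z1 z2] z3]; destruct C as [[c1 c2] c3]; unfold S2, dot, vscale; cbn. intros h1 h2 e hl.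
  assert (Q : (z1 - l*c1)^2 + (z2 - l*c2)^2 + (z3 - l*c3)^2 = 0).
  { apply (lc4 _ _ 1 (z1*z1+z2*z2+z3*z3 - 1) (l^2) (c1*c1+c2*c2+c3*c3-1) (-2*l) (z1*c1+z2*c2+z3*c3 - l) (-1) (l^2-1)); [lra|lra|lra|lra|ring]. }
  assert (0 <= (z1 - l*c1)^2) by apply pow2_ge_0.
  assert (0 <= (z2 - l*c2)^2) by apply pow2_ge_0.
  assert (0 <= (z3 - l*c3)^2) by apply pow2_ge_0.
  assert ((z1 - l*c1)^2 = 0) by lra. assert ((z2 - l*c2)^2 = 0) by lra. assert ((z3 - l*c3)^2 = 0) by lra.
  f_equal; [f_equal|]; nra.
Qed.

Lemma vscale_dot l C : S2 C -> dot (vscale l C) C = l.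
Proof. destruct C as [[c1 c2] c3]; unfold S2, dot, vscale; cbn. intro h.
  apply (lc1 _ _ l (c1*c1+c2*c2+c3*c3 - 1)); [lra|ring]. Qed.
Lemma vscale_dot2 l m C : S2 C -> dot (vscale l C) (vscale m C) = l*m.
Proof. destruct C as [[c1 c2] c3]; unfold S2, dot, vscale; cbn. intro h.
  apply (lc1 _ _ (l*m) (c1*c1+c2*c2+c3*c3 - 1)); [lra|ring]. Qed.

Lemma case1 A B C lx ly : S2 A -> S2 B -> S2 C -> (lx = 1 \/ lx = -1) -> (ly = 1 \/ ly = -1) ->
  let x := vscale lx C in let y := vscale ly C in
  Vset (nubar C (x, y)) /\
  (forall xy, nubar_fibre C (nubar C (x, y)) xy <-> xy = (x, y)) /\
  homeomorphic ed44 d_torus2 (nu_fibre A B C (nubar C (x, y))) torus2.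
Proof.
  intros hA hB hC hlx hly x y.
  assert (hx : S2 x) by (unfold x, S2; rewrite vscale_dot2 by auto; destruct hlx; subst; ring).
  assert (hy : S2 y) by (unfold y, S2; rewrite vscale_dot2 by auto; destruct hly; subst; ring).
  assert (EN : nubar C (x,y) = (lx*ly, lx, ly)).
  { unfold nubar; cbn [fst snd]. unfold x, y. rewrite vscale_dot2, !vscale_dot by auto. auto. }
  assert (fib : forall xy, nubar_fibre C (nubar C (x, y)) xy <-> xy = (x, y)).
  { intros [a b]. rewrite EN. unfold nubar_fibre, S2xS2, nubar; cbn [fst snd]. split.
    - intros [[ha hb] e]. injection e; intros e3 e2 _.
      unfold x, y. f_equal; apply par_unique; auto.
      all: first [destruct hlx as [e'|e']; rewrite e'; ring | destruct hly as [e'|e']; rewrite e'; ring].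
    - intros e. injection e; intros; subst. repeat split; auto. }
  split; [|split; auto].
  - rewrite EN. unfold Vset. destruct hlx, hly; subst; [left|right;right;left|right;right;right|right;left];
    peq; ring.
  - destruct (Hs A x hA hx) as [p0 [hp0 ep0]]. destruct (Hs B y hB hy) as [q0 [hq0 eq0]].
    assert (FD : Fdata edR (fun t : R => t = 0) (nubar_fibre C (nubar C (x,y))) (fun _ => (x,y)) (fun _ => 0)).
    { unfold Fdata; repeat match goal with |- _ /\ _ => split end.
      - intros; apply fib; auto.
      - auto.
      - intros; auto.
      - intros z hz. symmetry. apply fib; auto.
      - unfold ed33. apply cont_pair; try (unfold ed3; nn); apply cont_const3.
      - apply cont_const. }
    assert (SD : Sdata edR (fun t : R => t = 0) A B (fun _ => (x,y)) (fun _ => p0) (fun _ => q0)).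
    { unfold Sdata; repeat match goal with |- _ /\ _ => split end; try apply cont_const4.
      intros; repeat split; auto. }
    pose proof (nu_homeo edR _ A B C _ _ _ _ _ hA hB nonneg_edR FD SD) as Hh.
    eapply homeo_trans; [exact Hh|].
    exists (fun w : R * R2 * R2 => (snd (fst w), snd w)), (fun w : R2 * R2 => ((0, fst w), snd w)).
    repeat match goal with |- _ /\ _ => split end.
    + intros w [_ [c1 c2]]. split; auto.
    + intros w [c1 c2]. cbn. auto.
    + intros [[t u] v] [ht _]. cbn in *. subst. auto.
    + intros [u v] _. auto.
    + unfold d_torus2. apply cont_pair; try (unfold ed2; nn). apply cont_sndfst. apply cont_snd_id.
    + unfold d_torus2. apply cont_pair; try (unfold ed2; nn); [|apply cont_snd_id].
      apply cont_pair; [nn| unfold ed2; nn | apply cont_const | apply cont_fst_id].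
Qed.

Lemma Delta_props C v : S2 C -> DeltaSet C v -> 0 <= gram v /\
  -1 <= fst (fst v) <= 1 /\ -1 <= snd (fst v) <= 1 /\ -1 <= snd v <= 1.
Proof.
  intros hC [[x y] [[hx hy] e]]. subst v. cbn [fst snd] in *. rewrite gram_id by auto. split.
  - apply pow2_ge_0.
  - unfold nubar; cbn [fst snd]. repeat split; try apply CS_dot; auto.
Qed.

Lemma ed3_small (u1 u2 u3 w1 w2 w3 : R) r : 0 < r ->
  Rabs (u1 - w1) < r/4 -> Rabs (u2 - w2) < r/4 -> Rabs (u3 - w3) < r/2 ->
  ed3 (u1,u2,u3) (w1,w2,w3) < r.
Proof.
  intros hr h1 h2 h3. unfold ed3. apply dprod_small; [apply nonneg_dprod|apply nonneg_edR|exact hr| |unfold edR; exact h3].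
  unfold ed2. apply dprod_small; [apply nonneg_edR|apply nonneg_edR|lra|unfold edR; simpl; lra|unfold edR; simpl; lra].
Qed.

Lemma not_int C v : S2 C -> DeltaSet C v -> gram v = 0 -> ~ (snd (fst v)^2 = 1 /\ snd v ^2 = 1) ->
  ~ interior3 (DeltaSet C) v.
Proof.
  intros hC hv g0 npar [r [hr H]].
  destruct (Delta_props C v hC hv) as [_ [[a1 a2] [[b1 b2] [c1 c2]]]].
  destruct v as [[a b] c]. cbn [fst snd] in *.
  set (k := a*b*c).
  assert (hk : k < 1).
  { destruct (Rlt_or_le k 1) as [l|l]; auto. exfalso. apply npar. unfold k in l.
    assert (q1 : (a*b*c)^2 >= 1) by nra.
    assert (ha : a^2 <= 1) by nra. assert (hb : b^2 <= 1) by nra. assert (hc : c^2 <= 1) by nra.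
    assert (P : 0 <= (1-a^2)*(b*c)^2) by (apply Rmult_le_pos; [lra|apply pow2_ge_0]).
    assert (q2 : (b*c)^2 >= 1) by (replace ((a*b*c)^2) with (a^2*(b*c)^2) in q1 by ring; lra).
    assert (P1 : 0 <= b^2*(1-c^2)) by (apply Rmult_le_pos; [apply pow2_ge_0|lra]).
    assert (P2 : 0 <= c^2*(1-b^2)) by (apply Rmult_le_pos; [apply pow2_ge_0|lra]).
    replace ((b*c)^2) with (b^2*c^2) in q2 by ring.
    split; lra. }
  set (d := Rmin (r/8) ((1-k)/8)).
  assert (dp : 0 < d) by (apply Rmin_glb_lt; lra).
  assert (d1 : d <= r/8) by apply Rmin_l. assert (d2 : d <= (1-k)/8) by apply Rmin_r.
  set (t := 1 + d).
  assert (W : DeltaSet C (t*a, t*b, t*c)).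
  { apply H. apply ed3_small; auto;
    [replace (a - t*a) with (-(d*a)) by (unfold t; ring)
    |replace (b - t*b) with (-(d*b)) by (unfold t; ring)
    |replace (c - t*c) with (-(d*c)) by (unfold t; ring)];
    rewrite Rabs_Ropp, Rabs_mult, (Rabs_right d) by lra;
    (apply Rle_lt_trans with (d*1); [apply Rmult_le_compat_l; [lra|apply Rabs_le; lra]|lra]). }
  destruct (Delta_props C _ hC W) as [gw _].
  unfold gram in gw, g0.
  assert (S : a^2+b^2+c^2 = 1 + 2*k) by (unfold k; lra).
  assert (G : 1 + 2*(t*a)*(t*b)*(t*c) - (t*a)^2 - (t*b)^2 - (t*c)^2 = d * (2*k*t^2 - t - 1)).
  { transitivity (1 + 2*t^3*k - t^2*(a^2+b^2+c^2)); [unfold k; ring|]. rewrite S. unfold t. ring. }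
  rewrite G in gw.
  assert (neg : 2*k*t^2 - t - 1 < 0).
  { unfold t. destruct (Rle_lt_dec k 0).
    - assert (0 <= (1+d)^2) by apply pow2_ge_0. nra.
    - assert ((1+d)^2 <= 1 + 3*d) by nra. nra. }
  nra.
Qed.

Lemma realizeE3 a b c : 0 <= gram (a,b,c) -> b^2 < 1 -> DeltaSet E3 (a,b,c).
Proof.
  intros g hb. unfold gram in g.
  set (sb := sqrt (1 - b^2)).
  assert (sb2 : sb*sb = 1 - b^2) by (apply sqrt_sqrt; lra).
  assert (sbp : 0 < sb) by (apply sqrt_lt_R0; lra).
  set (al := (a - b*c)/sb).
  assert (q : 0 <= 1 - c^2 - al^2).
  { assert (E : 1 - c^2 - al^2 = (1 + 2*a*b*c - a^2 - b^2 - c^2)/(sb*sb)).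
    { unfold al. transitivity (((sb*sb)*(1-c^2) - (a-b*c)^2)/(sb*sb)); [field; lra|].
      rewrite sb2. f_equal. ring. }
    rewrite E. unfold Rdiv. apply Rmult_le_pos; [lra| apply Rlt_le, Rinv_0_lt_compat; nra]. }
  set (be := sqrt (1 - c^2 - al^2)).
  assert (be2 : be*be = 1 - c^2 - al^2) by (apply sqrt_sqrt; lra).
  exists ((sb, 0, b), (al, be, c)). unfold S2xS2, S2, nubar, E3, dot; cbn [fst snd]. split; [split|].
  - lra.
  - lra.
  - peq; try ring. unfold al. field. lra.
Qed.

Lemma realize C w : S2 C -> 0 <= gram w -> (snd (fst w))^2 < 1 -> DeltaSet C w.
Proof.
  intros hC g hb. destruct w as [[a b] c]. cbn [fst snd] in hb.
  destruct (realizeE3 a b c g hb) as [z hz].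
  assert (hE : S2 E3) by (unfold S2, E3, dot; simpl; ring).
  destruct (Hs C E3 hC hE) as [r [hr eC]].
  exists (piX (fst z) (qconj r), piX (snd z) (qconj r)).
  apply (fib_transport C (a,b,c) r _ hr eC). cbn [fst snd]. rewrite !RRi by auto.
  destruct z; exact hz.
Qed.

Lemma interior_N C v : S2 C -> DeltaSet C v -> 0 < gram v -> interior3 (DeltaSet C) v.
Proof.
  intros hC hv gp.
  destruct (Delta_props C v hC hv) as [_ [[a1 a2] [[b1 b2] [c1 c2]]]].
  assert (hb : snd (fst v) ^2 < 1).
  { destruct v as [[a b] c]. cbn [fst snd] in *. unfold gram in gp.
    assert (E : 1 + 2*a*b*c - a^2 - b^2 - c^2 = (1 - b^2)*(1-c^2) - (a - b*c)^2) by ring.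
    rewrite E in gp. destruct (Rlt_or_le (b^2) 1) as [l|l]; auto.
    assert (b^2 = 1) by nra. rewrite H in gp. assert (0 <= (a - b*c)^2) by apply pow2_ge_0. lra. }
  assert (cg : cont_on ed3 edR (fun _ => True) (fun w => gram w)).
  { apply (cont_gram _ _ (fun w => w)). apply cont_id. }
  assert (cb : cont_on ed3 edR (fun _ => True) (fun w : R3 => 1 - snd (fst w) ^2)).
  { simpl. cont_tac. }
  destruct (cg v I (gram v) gp) as [d1 [hd1 H1]].
  destruct (cb v I (1 - snd (fst v)^2) ltac:(lra)) as [d2 [hd2 H2]].
  exists (Rmin d1 d2). split; [apply Rmin_glb_lt; auto|].
  intros w hw. apply realize; auto.
  - assert (k := H1 w I (Rlt_le_trans _ _ _ hw (Rmin_l _ _))). unfold edR in k.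
    apply Rabs_def2 in k. lra.
  - assert (k := H2 w I (Rlt_le_trans _ _ _ hw (Rmin_r _ _))). unfold edR in k.
    apply Rabs_def2 in k. lra.
Qed.

Lemma perm_homeo : homeomorphic (dprod (dprod d_two_circles ed2) ed2) d_two_torus3
   (fun w => two_circles (fst (fst w)) /\ circle (snd (fst w)) /\ circle (snd w)) two_torus3.
Proof.
  exists (fun w : R2 * R * R2 * R2 => (((fst (fst (fst w)), snd (fst w)), snd w), snd (fst (fst w)))).
  exists (fun u : R2 * R2 * R2 * R => (((fst (fst (fst u)), snd u), snd (fst (fst u))), snd (fst u))).
  repeat match goal with |- _ /\ _ => split end.
  - intros [[[cs k] u] v] [[h1 h2] [h3 h4]]. cbn in *. unfold two_torus3, torus3; cbn. auto.
  - intros [[[cs u] v] k] [[h1 [h2 h3]] h4]. cbn in *. unfold two_circles; cbn. auto.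
  - intros [[[cs k] u] v] _. reflexivity.
  - intros [[[cs u] v] k] _. reflexivity.
  - unfold d_two_torus3, d_torus3. cont_tac.
  - unfold d_two_torus3, d_torus3. cont_tac.
Qed.

Lemma det3_E3 u v : det3 u v E3 = det2 (u,v).
Proof. destruct u as [[u1 u2] u3]; destruct v as [[v1 v2] v3]. unfold det3, det2, cross, dot, E3; simpl. ring. Qed.
Lemma dotE3 u : dot u E3 = snd u.
Proof. destruct u as [[u1 u2] u3]. unfold dot, E3; simpl. ring. Qed.
Lemma mm_S2 u : S2 u -> mm u = 1 - (snd u)^2.
Proof. destruct u as [[u1 u2] u3]. unfold S2, mm, dot; simpl. intro; lra. Qed.
Lemma ed3_refl v : ed3 v v = 0.
Proof. unfold ed3, ed2, dprod, edR. rewrite !Rminus_diag, Rabs_R0.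
  replace (0^2+0^2) with 0 by ring. rewrite sqrt_0. replace (0^2+0^2) with 0 by ring. apply sqrt_0. Qed.

Theorem mainTheorem8 (A B C : R3) (hA : S2 A) (hB : S2 B) (hC : S2 C)
  (x y : R3) (hx : S2 x) (hy : S2 y) :
  (span_dim (x :: y :: C :: nil)%list 1%nat ->
     Vset (nubar C (x, y)) /\
     (forall xy, nubar_fibre C (nubar C (x, y)) xy <-> xy = (x, y)) /\
     homeomorphic ed44 d_torus2 (nu_fibre A B C (nubar C (x, y))) torus2) /\
  (span_dim (x :: y :: C :: nil)%list 2%nat ->
     (boundary3 (DeltaSet C) (nubar C (x, y)) /\ ~ Vset (nubar C (x, y))) /\
     homeomorphic ed33 ed2 (nubar_fibre C (nubar C (x, y))) circle /\
     homeomorphic ed44 d_torus3 (nu_fibre A B C (nubar C (x, y))) torus3) /\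
  (span_dim (x :: y :: C :: nil)%list 3%nat ->
     interior3 (DeltaSet C) (nubar C (x, y)) /\
     homeomorphic ed33 d_two_circles (nubar_fibre C (nubar C (x, y))) two_circles /\
     homeomorphic ed44 d_two_torus3 (nu_fibre A B C (nubar C (x, y))) two_torus3) /\
  nubar C (C, C) = (1, 1, 1) /\
  nubar C (C, vopp C) = (-1, 1, -1) /\
  nubar C (vopp C, C) = (-1, -1, 1) /\
  nubar C (vopp C, vopp C) = (1, -1, -1).
Proof.
  assert (hE : S2 E3) by (unfold S2, E3, dot; simpl; ring).
  destruct (Hs C E3 hC hE) as [r [hr eC]].
  set (xE := piX x r). set (yE := piX y r).
  assert (hxE : S2 xE) by (apply S2_piX; auto).
  assert (hyE : S2 yE) by (apply S2_piX; auto).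
  assert (NE : nubar C (x,y) = nubar E3 (xE,yE)).
  { unfold nubar, xE, yE; cbn [fst snd]. rewrite <- eC, !dotR by auto. reflexivity. }
  assert (gN : gram (nubar C (x,y)) = (det3 x y C)^2) by (apply gram_id; auto).
  assert (gNE : gram (nubar C (x,y)) = (det2 (xE,yE))^2) by (rewrite NE, gram_id, det3_E3 by auto; auto).
  assert (bE : snd xE = dot x C) by (rewrite <- dotE3; unfold xE; rewrite <- eC, dotR; auto).
  assert (cE : snd yE = dot y C) by (rewrite <- dotE3; unfold yE; rewrite <- eC, dotR; auto).
  assert (inD : DeltaSet C (nubar C (x,y))) by (exists (x,y); split; [split|]; auto).
  assert (parb : forall z, S2 z -> dot z C ^2 = 1 -> exists l, z = vscale l C).
  { intros z hz e. exists (dot z C). apply par_unique; auto. }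
  split; [|split; [|split]].
  -
    intro sp. destruct (span1_par x y C hx hy hC sp) as [lx [ly [h1 [h2 [ex ey]]]]].
    subst x y. apply case1; auto.
  -
    intro sp. destruct (span2_props x y C hx hy hC sp) as [D0 npar].
    assert (np : ~ (dot x C ^2 = 1 /\ dot y C ^2 = 1)).
    { intros [e1 e2]. apply npar. split; [apply parb|apply parb]; auto. }
    assert (dE : det2 (xE,yE) = 0).
    { assert (det2 (xE,yE)^2 = 0) by (rewrite <- gNE, gN, D0; ring).
      assert (det2 (xE,yE) * det2 (xE,yE) = 0) by lra. destruct (Rmult_integral _ _ H0); auto. }
    assert (bnd : dot x C ^2 <= 1 /\ dot y C ^2 <= 1).
    { destruct (CS_dot x C hx hC). destruct (CS_dot y C hy hC). split; nra. }
    assert (exbx : exists bx : bool, 0 < mm (if bx then xE else yE)).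
    { destruct (Rlt_or_le (dot x C ^2) 1) as [l|l].
      - exists true. rewrite mm_S2, bE by auto. lra.
      - exists false. rewrite mm_S2, cE by auto. assert (dot x C ^2 = 1) by lra.
        destruct (Rlt_or_le (dot y C ^2) 1); [lra|]. exfalso; apply np; split; lra. }
    destruct exbx as [bx hbx].
    destruct (data2_E3 A B xE yE bx hA hB hxE hyE dE hbx) as [f [g [sA [sB [FD SD]]]]].
    destruct (transport _ _ A B C _ f g sA sB r hr eC FD SD) as [FD' SD'].
    split; [split|split].
    + split.
      * intros e he. exists (nubar C (x,y)). split; auto. rewrite ed3_refl. auto.
      * apply not_int; [exact hC|exact inD| rewrite gN, D0; ring| unfold nubar; cbn [fst snd]; exact np].
    + intro V. apply np. unfold nubar in V; cbn [fst snd] in V.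
      unfold Vset in V. destruct V as [V|[V|[V|V]]]; injection V; intros e1 e2 e3; rewrite e1, e2; split; ring.
    + rewrite NE. eapply homeo_of_data. exact FD'.
    + rewrite NE. exact (nu_homeo ed2 circle A B C _ _ _ _ _ hA hB (nonneg_dprod _ _) FD' SD').
  -
    intro sp. pose proof (span3_det x y C sp) as D0.
    assert (gp : 0 < gram (nubar C (x,y))).
    { rewrite gN. assert (0 <= (det3 x y C)^2) by apply pow2_ge_0.
      destruct (Rle_lt_or_eq_dec _ _ H); auto. exfalso. apply D0.
      assert (det3 x y C * det3 x y C = 0) by lra. destruct (Rmult_integral _ _ H0); auto. }
    assert (dE : det2 (xE,yE) <> 0).
    { intro e. rewrite gNE, e in gp. lra. }
    destruct (data3_E3 A B xE yE hA hB hxE hyE dE) as [f [g [sA [sB [FD SD]]]]].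
    destruct (transport _ _ A B C _ f g sA sB r hr eC FD SD) as [FD' SD'].
    split; [|split].
    + apply interior_N; auto.
    + rewrite NE. eapply homeo_of_data. exact FD'.
    + rewrite NE. eapply homeo_trans; [|exact perm_homeo].
      exact (nu_homeo d_two_circles two_circles A B C _ _ _ _ _ hA hB (nonneg_dprod _ _) FD' SD').
  - unfold S2 in hC. destruct C as [[c1 c2] c3]. unfold nubar, vopp, dot in *; cbn [fst snd] in *.
    repeat split; peq; lra.
Qed.
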